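(* Fix an integer $n\ge 1$. For $m>n$ let \[ \begin{split}\delta_{m,n}(p) &= 9 + n (m^2 (2 + n)^2 + 3 (4 + n) - 2 m (5 + 2n)) - 24 p - n (12 + m^2 (2 + n) + 2 m n (3 + n)) p \\ &\qquad{}+(22 + n (8 + 2 m (1 + n) + n (3 + n))) p^2 - (8 + n (2 + n)) p^3 + p^4 ,\end{split} \] and let $p^*(m,n)$ be the real root of $\delta_{m,n}(p)=0$ that grows with $m$ (of order $m^{2/3}$). Then as $m\to\infty$, \[ p^*(m,n) = m^{2/3} (n (2 + n))^{1/3} - m^{1/3}\cdot\frac{2 n (1 + n)}{3 (n (2 + n))^{1/3}} + \frac{1}{3}(6 + n + n^2) - m^{-1/3}\cdot\frac{2 n^2 (216 + 230 n + 87 n^2 + 24 n^3 + 5 n^4)}{81 (n (2 + n))^{5/3}} + o(m^{-1/3}). \]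
   Context: $\delta_{m,n}(p)$ is a quartic polynomial in $p$ whose appropriate root (rounded) gives the optimal training-set size for a linear regression with $m$ Gaussian data points of dimension $n$. *)

(* Defs.v *)
From Stdlib Require Import Reals.
Open Scope R_scope.

Definition delta (m n : nat) (p : R) : R :=
  let M := INR m in let N := INR n in
  9 + N * (M^2 * (2 + N)^2 + 3 * (4 + N) - 2 * M * (5 + 2 * N))
  - 24 * p - N * (12 + M^2 * (2 + N) + 2 * M * N * (3 + N)) * p
  + (22 + N * (8 + 2 * M * (1 + N) + N * (3 + N))) * p^2
  - (8 + N * (2 + N)) * p^3 + p^4.

Definition pstar_approx (m n : nat) : R :=
  let M := INR m in let N := INR n in
  let c := Rpower (N * (2 + N)) (1/3) in
  Rpower M (2/3) * c
  - Rpower M (1/3) * (2 * N * (1 + N) / (3 * c))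
  + (1/3) * (6 + N + N^2)
  - Rpower M (-(1/3)) *
      (2 * N^2 * (216 + 230 * N + 87 * N^2 + 24 * N^3 + 5 * N^4)
       / (81 * Rpower (N * (2 + N)) (5/3))).

(* Main.v *)
Require Import Defs.
From Stdlib Require Import Reals Lra Lia List Field Arith.
Import ListNotations.
Open Scope R_scope.

Fixpoint hor (l : list R) (x : R) : R :=
  match l with nil => 0 | a :: l' => a + x * hor l' x end.

Definition deltaR (M N p : R) : R :=
  9 + N * (M^2 * (2 + N)^2 + 3 * (4 + N) - 2 * M * (5 + 2 * N))
  - 24 * p - N * (12 + M^2 * (2 + N) + 2 * M * N * (3 + N)) * p
  + (22 + N * (8 + 2 * M * (1 + N) + N * (3 + N))) * p^2
  - (8 + N * (2 + N)) * p^3 + p^4.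

Lemma delta_eq m n p : delta m n p = deltaR (INR m) (INR n) p.
Proof. reflexivity. Qed.

Definition dD (M N y : R) : R :=
  4*y^3 - 3*(8 + N*(2+N))*y^2 + 2*(22 + N * (8 + 2 * M * (1 + N) + N * (3 + N)))*y
  - 24 - N * (12 + M^2 * (2 + N) + 2 * M * N * (3 + N)).

Definition convc (M N : R) : Prop :=
  0 < (22 + N * (8 + 2 * M * (1 + N) + N * (3 + N))) - 3 * (8 + N*(2+N))^2 / 8.

Lemma tangent M N x y : convc M N ->
  deltaR M N y + dD M N y * (x - y) <= deltaR M N x.
Proof.
  intro Hc; unfold convc in Hc.
  remember (8 + N*(2+N)) as A eqn:HA.
  remember (22 + N * (8 + 2 * M * (1 + N) + N * (3 + N))) as B eqn:HB.
  assert (E : deltaR M N x - deltaR M N y - dD M N y * (x - y) =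
     (x-y)^2 * ((x + y - A/2)^2 + 2*(y - A/4)^2 + (B - 3*A^2/8))).
  { unfold deltaR, dD. rewrite HA, HB. field. }
  assert (0 <= (x-y)^2 * ((x + y - A/2)^2 + 2*(y - A/4)^2 + (B - 3*A^2/8))).
  { apply Rmult_le_pos. apply pow2_ge_0.
    assert (0 <= (x + y - A/2)^2) by apply pow2_ge_0.
    assert (0 <= (y - A/4)^2) by apply pow2_ge_0. lra. }
  lra.
Qed.

Lemma chord M N x y z : convc M N -> x < y -> y < z ->
  (z - x) * deltaR M N y <= (z - y) * deltaR M N x + (y - x) * deltaR M N z.
Proof.
  intros Hc Hxy Hyz.
  pose proof (tangent M N x y Hc) as T1.
  pose proof (tangent M N z y Hc) as T2.
  assert (A1 : (z - y) * (deltaR M N y + dD M N y * (x - y)) <= (z-y) * deltaR M N x)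
    by (apply Rmult_le_compat_l; lra).
  assert (A2 : (y - x) * (deltaR M N y + dD M N y * (z - y)) <= (y-x) * deltaR M N z)
    by (apply Rmult_le_compat_l; lra).
  nra.
Qed.

Lemma squeeze M N K b b' r : convc M N ->
  deltaR M N K < 0 -> deltaR M N b < 0 -> 0 < deltaR M N b' ->
  K < b -> b < b' -> K < r -> deltaR M N r = 0 -> b < r < b'.
Proof.
  intros Hc HK Hb Hb' HKb Hbb' HKr Hr.
  split.
  - destruct (Rlt_or_le b r) as [h|h]; auto.
    destruct (Req_dec r b) as [e|e]. subst; lra.
    pose proof (chord M N K r b Hc HKr ltac:(lra)) as C.
    rewrite Hr in C. nra.
  - destruct (Rlt_or_le r b') as [h|h]; auto.
    destruct (Req_dec r b') as [e|e]. subst; lra.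
    pose proof (chord M N b b' r Hc Hbb' ltac:(lra)) as C.
    rewrite Hr in C. nra.
Qed.

Definition ev (P : nat -> Prop) := exists N0, forall m, (N0 <= m)%nat -> P m.

Lemma ev_and P Q : ev P -> ev Q -> ev (fun m => P m /\ Q m).
Proof.
  intros [a Ha] [b Hb]. exists (max a b). intros m Hm. split.
  apply Ha; lia. apply Hb; lia.
Qed.

Lemma ev_impl (P Q : nat -> Prop) : ev P -> (forall m, P m -> Q m) -> ev Q.
Proof. intros [a Ha] H. exists a. intros m Hm. apply H, Ha, Hm. Qed.

Lemma cv_ev_pos v L : Un_cv v L -> 0 < L -> ev (fun m => 0 < v m).
Proof.
  intros H HL. destruct (H L HL) as [N0 HN]. exists N0. intros m Hm.
  specialize (HN m Hm). unfold Rdist in HN. apply Rabs_def2 in HN. lra.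
Qed.

Lemma cv_ev_neg v L : Un_cv v L -> L < 0 -> ev (fun m => v m < 0).
Proof.
  intros H HL. destruct (H (-L) ltac:(lra)) as [N0 HN]. exists N0. intros m Hm.
  specialize (HN m Hm). unfold Rdist in HN. apply Rabs_def2 in HN. lra.
Qed.

Lemma cv_const a : Un_cv (fun _ => a) a.
Proof. intros eps He. exists 0%nat. intros. unfold Rdist. rewrite Rminus_diag, Rabs_R0. lra. Qed.

Lemma hor_cv l v : Un_cv v 0 -> Un_cv (fun m => hor l (v m)) (hor l 0).
Proof.
  intro Hv. induction l as [|a l IH]; simpl.
  - apply cv_const.
  - apply CV_plus. apply cv_const. apply CV_mult; assumption.
Qed.

Definition useq (m : nat) : R := / Rpower (INR m) (1/3).

Lemma Rpower_pos x y : 0 < Rpower x y.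
Proof. unfold Rpower. apply exp_pos. Qed.

Lemma cube_t x : 0 < x -> (Rpower x (1/3))^3 = x.
Proof.
  intro hx. rewrite <- Rpower_pow by apply Rpower_pos.
  rewrite Rpower_mult. replace (1/3 * INR 3) with 1 by (simpl; field).
  apply Rpower_1; auto.
Qed.

Lemma useq_cv : Un_cv useq 0.
Proof.
  intros eps He.
  destruct (archimed ((/eps)^3)) as [H1 _].
  destruct (INR_unbounded (IZR (up ((/eps)^3)))) as [N0 HN0].
  exists (S N0). intros m Hm. unfold Rdist, useq. rewrite Rminus_0_r.
  assert (HM : (/eps)^3 < INR m).
  { apply le_INR in Hm. rewrite S_INR in Hm. lra. }
  assert (Hm0 : 0 < INR m).
  { assert (0 < (/eps)^3) by (apply pow_lt; apply Rinv_0_lt_compat; lra). lra. }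
  set (t := Rpower (INR m) (1/3)).
  assert (Ht : 0 < t) by apply Rpower_pos.
  rewrite Rabs_right by (left; apply Rinv_0_lt_compat; auto).
  assert (/eps < t).
  { destruct (Rlt_or_le (/eps) t) as [h|h]; auto.
    assert (t^3 <= (/eps)^3) by (apply pow_incr; lra).
    unfold t in H; rewrite cube_t in H by auto. lra. }
  apply Rinv_lt_contravar in H. rewrite Rinv_inv in H. auto.
  apply Rmult_lt_0_compat; auto. apply Rinv_0_lt_compat; lra.
Qed.

Definition Ph (c s N u e : R) :=
  81 * s^2 * c - 54 * N * (1+N) * c^2 * s * u + 27 * (6 + N + N^2) * s^2 * u^2
  - 2 * N^2 * (216 + 230 * N + 87 * N^2 + 24 * N^3 + 5 * N^4) * c * u^3 + 81 * e * s^2 * u^3.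
Definition GcP (P s N u : R) :=
  6561^2 * s^8 * (9*u^8 + N*((2+N)^2*u^2 + 3*(4+N)*u^8 - 2*(5+2*N)*u^5))
  - 24*81^3*u^6*s^6*P - 81^3*N*(12*u^6 + (2+N) + 2*N*(3+N)*u^3)*s^6*P
  + 81^2*((22+8*N+3*N^2+N^3)*u^4 + 2*N*(1+N)*u)*s^4*P^2
  - 81*(8+2*N+N^2)*u^2*s^2*P^3 + P^4.
Definition Gc (c s N u e : R) := GcP (Ph c s N u e) s N u.
Definition Lcoef (c s N e : R) : list R :=
  [129140163*s^9*e;
   172186884*c*s^8*N*e + (-172186884)*c*s^9*e + 68024448*c^2*s^6*N + (-34012224)*c^2*s^7 + 93533616*c^2*s^7*N + (-124357194)*c^2*s^8 + 88219206*c^2*s^8*N + (-65367243)*c^2*s^9 + 5314410*c^2*s^9*N + (-3720087)*c^2*s^10;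
   (-181398528)*s^6*N + 90699264*s^7 + (-385471872)*s^7*N + 170061120*s^8 + (-611865738)*s^8*N + 283435200*s^9 + (-218953692)*s^9*N + 94242204*s^10 + (-12045996)*s^10*N + 4960116*s^11 + (-229582512)*c^2*s^7*N*e + 114791256*c^2*s^8*e + (-401769396)*c^2*s^8*N*e + 157837977*c^2*s^9*e;
   401769396*s^8*N*e + (-717445350)*s^9*e + 315675954*s^9*N*e + (-114791256)*s^10*e + 80621568*c*s^5*N + (-40310784)*c*s^6 + 458535168*c*s^6*N + (-219189888)*c*s^7 + 983520144*c*s^7*N + (-439482024)*c*s^8 + 1209638448*c*s^8*N + (-402163056)*c*s^9 + 334296072*c*s^9*N + (-88278255)*c*s^10 + 17242308*c*s^10*N + (-4113747)*c*s^11 + 258280326*c^2*s^8*e^2;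
   258280326*s^8*N*e^2 + (-258280326)*s^9*e^2 + 408146688*c*s^6*N*e + (-204073344)*c*s^7*e + 255091680*c*s^7*N*e + (-248714388)*c*s^8*e + (-695124828)*c*s^8*N*e + 526126590*c*s^9*e + (-197696052)*c*s^9*N*e + 54206982*c*s^10*e + 161243136*c^2*s^4*N + (-80621568)*c^2*s^5 + 161243136*c^2*s^5*N + (-60466176)*c^2*s^6 + (-539156736)*c^2*s^6*N + 279656064*c^2*s^7 + (-1569916080)*c^2*s^7*N + 943366824*c^2*s^8 + (-1273411368)*c^2*s^8*N + 521756964*c^2*s^9 + (-254422458)*c^2*s^9*N + 70032114*c^2*s^10 + (-11770434)*c^2*s^10*N + 2558790*c^2*s^11;
   (-143327232)*s^4*N + 71663616*s^5 + (-573308928)*s^5*N + 268738560*s^6 + (-717755904)*s^6*N + 296172288*s^7 + 228847680*s^7*N + (-130863519)*s^8 + 1811933874*s^8*N + (-841411071)*s^9 + 878351688*s^9*N + (-328867938)*s^10 + 133761294*s^10*N + (-34112826)*s^11 + 5463126*s^11*N + (-1019142)*s^12 + (-229582512)*c*s^7*N*e^2 + 114791256*c*s^8*e^2 + (-401769396)*c*s^8*N*e^2 + 157837977*c*s^9*e^2 + (-362797056)*c^2*s^5*N*e + 181398528*c^2*s^6*e + (-1043041536)*c^2*s^6*N*e + 476171136*c^2*s^7*e + (-673158600)*c^2*s^7*N*e + 286269552*c^2*s^8*e + 669615660*c^2*s^8*N*e + (-257926032)*c^2*s^9*e + 88573500*c^2*s^9*N*e + (-19840464)*c^2*s^10*e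;
   (-161243136)*s^5*N*e + 80621568*s^6*e + 80621568*s^6*N*e + (-60466176)*s^7*e + 1156415616*s^7*N*e + (-558052416)*s^8*e + 933761520*s^8*N*e + 469872576*s^9*e + (-177540660)*s^9*N*e + 147681549*s^10*e + (-24564384)*s^10*N*e + 6987465*s^11*e + (-42467328)*c*s^3*N + 21233664*c*s^4 + 21233664*c*s^4*N + (-15925248)*c*s^5 + 545439744*c*s^5*N + (-267411456)*c*s^6 + 976997376*c*s^6*N + (-423304704)*c*s^7 + 82073088*c*s^7*N + 48988800*c*s^8 + 172186884*c*s^8*e^3 + (-1183522752)*c*s^8*N + 305721216*c*s^9 + (-432511812)*c*s^9*N + 97475562*c*s^10 + (-46313856)*c*s^10*N + 8508888*c*s^11 + (-1501740)*c*s^11*N + 222750*c*s^12 + (-204073344)*c^2*s^6*N*e^2 + 102036672*c^2*s^7*e^2 + 102036672*c^2*s^7*N*e^2 + (-765275040)*c^2*s^8*e^2 + 220016574*c^2*s^8*N*e^2 + (-92470734)*c^2*s^9*e^2;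
   272097792*s^6*N*e^2 + (-136048896)*s^7*e^2 + 374134464*s^7*N*e^2 + (-239148450)*s^8*e^2 + (-249777270)*s^8*N*e^2 + 298138401*s^9*e^2 + (-64835802)*s^9*N*e^2 + 28166373*s^10*e^2 + 214990848*c*s^4*N*e + (-107495424)*c*s^5*e + 537477120*c*s^5*N*e + (-241864704)*c*s^6*e + (-41150592)*c*s^6*N*e + 74323008*c*s^7*e + (-661873680)*c*s^7*N*e + 530181288*c*s^8*e + (-76317552)*c*s^8*N*e + (-95974308)*c*s^9*e + 75372768*c*s^9*N*e + (-36531648)*c*s^10*e + 6508512*c*s^10*N*e + (-1705860)*c*s^11*e + 56623104*c^2*s^2*N + (-28311552)*c^2*s^3 + 205258752*c^2*s^3*N + (-95551488)*c^2*s^4 + 93007872*c^2*s^4*N + (-24385536)*c^2*s^5 + (-341867520)*c^2*s^5*N + 171942912*c^2*s^6 + (-362394432)*c^2*s^6*N + 139120416*c^2*s^7 + 55213920*c^2*s^7*N + 114791256*c^2*s^7*N*e^3 + (-205412760)*c^2*s^8 + (-114791256)*c^2*s^8*e^3 + 195428376*c^2*s^8*N + (-107689500)*c^2*s^9 + 30820824*c^2*s^9*N + (-11633868)*c^2*s^10 + 741960*c^2*s^10*N + (-348948)*c^2*s^11 + (-31320)*c^2*s^11*N + (-2700)*c^2*s^12;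
   (-28311552)*s^3*N + 14155776*s^4 + (-92012544)*s^4*N + 42467328*s^5 + 60162048*s^5*N + (-39813120)*s^6 + 324587520*s^6*N + (-150128640)*s^7 + (-78098688)*s^7*N + 73042560*s^8 + (-357699456)*s^8*N + (-57395628)*s^8*N*e^3 + 153086112*s^9 + 14348907*s^9*e^3 + 112094928*s^9*N + (-52263144)*s^10 + 61366896*s^10*N + (-17595144)*s^11 + 6649776*s^11*N + (-1331640)*s^12 + 205200*s^12*N + (-27000)*s^13 + (-136048896)*c*s^6*N*e^2 + 68024448*c*s^7*e^2 + (-136048896)*c*s^7*N*e^2 + 51018336*c*s^8*e^2 + 257217444*c*s^8*N*e^2 + (-79716150)*c*s^9*e^2 + 27634932*c*s^9*N*e^2 + (-5314410)*c*s^10*e^2 + (-107495424)*c^2*s^4*N*e + 53747712*c^2*s^5*e + (-228427776)*c^2*s^5*N*e + 100776960*c^2*s^6*e + 283855104*c^2*s^6*N*e + (-163762560)*c^2*s^7*e + 457065504*c^2*s^7*N*e + (-182973168)*c^2*s^8*e + (-334873440)*c^2*s^8*N*e + 124317828*c^2*s^9*e + (-85240512)*c^2*s^9*N*e + 20627784*c^2*s^10*e + (-4199040)*c^2*s^10*N*e + 656100*c^2*s^11*e;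
   (-42467328)*s^3*N*e + 21233664*s^4*e + (-122093568)*s^4*N*e + 55738368*s^5*e + 133373952*s^5*N*e + (-79294464)*s^6*e + 430562304*s^6*N*e + (-192637440)*s^7*e + (-267287040)*s^7*N*e + 175519872*s^8*e + 43046721*s^8*e^4 + (-415378368)*s^8*N*e + (-253101024)*s^9*e + 93514176*s^9*N*e + (-110302560)*s^10*e + 25209792*s^10*N*e + (-11314080)*s^11*e + 1166400*s^11*N*e + (-324000)*s^12*e + (-8388608)*c*s*N + 4194304*c*s^2 + (-33554432)*c*s^2*N + 15728640*c*s^3 + 14942208*c*s^3*N + (-11141120)*c*s^4 + 162070528*c*s^4*N + (-77398016)*c*s^5 + (-493568)*c*s^5*N + 18490368*c*s^6 + (-308186112)*c*s^6*N + (-68024448)*c*s^6*N*e^3 + 145231104*c*s^7 + 34012224*c*s^7*e^3 + 44362496*c*s^7*N + (-42515280)*c*s^7*N*e^3 + (-55304320)*c*s^8 + (-216827928)*c*s^8*e^3 + 223946624*c*s^8*N + 25509168*c*s^8*N*e^3 + 45168912*c*s^9 + (-21257640)*c*s^9*e^3 + (-20406528)*c*s^9*N + 43770048*c*s^10 + (-15843328)*c*s^10*N + 7811936*c*s^11 + (-1630720)*c*s^11*N + 494400*c*s^12 + (-48000)*c*s^12*N + 10000*c*s^13 + (-80621568)*c^2*s^4*N*e^2 + 40310784*c^2*s^5*e^2 + (-141087744)*c^2*s^5*N*e^2 + 60466176*c^2*s^6*e^2 + 260760384*c^2*s^6*N*e^2 + (-142977312)*c^2*s^7*e^2 + 238715424*c^2*s^7*N*e^2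 + 378071064*c^2*s^8*e^2 + (-91958976)*c^2*s^8*N*e^2 + 85975344*c^2*s^9*e^2 + (-9447840)*c^2*s^9*N*e^2 + 3936600*c^2*s^10*e^2].

Definition Q1 (c s N u e : R) : R :=
  (-26121388032)*s^2*N^6*u^12*e + 4353564672*s^2*N^7*u^11 + (-83443322880)*s^2*N^7*u^12*e + 11730438144*s^2*N^8*u^11 + (-120415030272)*s^2*N^8*u^12*e + 13115561472*s^2*N^9*u^11 + (-107462225664)*s^2*N^9*u^12*e + 7875785088*s^2*N^10*u^11 + (-68857444224)*s^2*N^10*u^12*e + 2521055232*s^2*N^11*u^11 + (-34286607936)*s^2*N^11*u^12*e + (-23685696)*s^2*N^12*u^11 + (-13661008992)*s^2*N^12*u^12*e + (-580382496)*s^2*N^13*u^11 + (-4401806976)*s^2*N^13*u^12*e + (-404782920)*s^2*N^14*u^11 + (-1155179232)*s^2*N^14*u^12*e + (-174287376)*s^2*N^15*u^11 + (-242906688)*s^2*N^15*u^12*e + (-55780488)*s^2*N^16*u^11 + (-39307680)*s^2*N^16*u^12*e + (-13690944)*s^2*N^17*u^11 + (-4665600)*s^2*N^17*u^12*e + (-2498040)*s^2*N^18*u^11 + (-324000)*s^2*N^18*u^12*e + (-334800)*s^2*N^19*u^11 + (-27000)*s^2*N^20*u^11 + (-6530347008)*s^3*N^5*u^8 + (-26967914496)*s^3*N^6*u^8 + (-47009652480)*s^3*N^7*u^8 + (-46289657088)*s^3*N^8*u^8 + (-29677275072)*s^3*N^9*u^8 + (-13773131136)*s^3*N^10*u^8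 + (-4922254656)*s^3*N^11*u^8 + (-1344812544)*s^3*N^12*u^8 + (-273077568)*s^3*N^13*u^8 + (-40590720)*s^3*N^14*u^8 + (-3499200)*s^3*N^15*u^8 + 3265173504*s^4*N^4*u^8 + 14693280768*s^4*N^4*u^9*e + 11035077120*s^4*N^5*u^8 + 31291246080*s^4*N^5*u^9*e + 19514058624*s^4*N^6*u^8 + 28495945152*s^4*N^6*u^9*e + 21003108192*s^4*N^7*u^8 + 15868592064*s^4*N^7*u^9*e + 14568534288*s^4*N^8*u^8 + 6540739632*s^4*N^8*u^9*e + 7118824968*s^4*N^9*u^8 + 2039473728*s^4*N^9*u^9*e + 2666276676*s^4*N^10*u^8 + 455385888*s^4*N^10*u^9*e + 766464768*s^4*N^11*u^8 + 75582720*s^4*N^11*u^9*e + 161890488*s^4*N^12*u^8 + 7873200*s^4*N^12*u^9*e + 25281720*s^4*N^13*u^8 + 2405700*s^4*N^14*u^8 + 2448880128*s^5*N^3*u^5 + (-612220032)*s^5*N^3*u^8 + 1836660096*s^5*N^3*u^10*e^2 + 8117584128*s^5*N^4*u^5 + (-2488561056)*s^5*N^4*u^8 + (-612220032)*s^5*N^4*u^9*e + 3792362976*s^5*N^4*u^10*e^2 + 10526783328*s^5*N^5*u^5 + (-4753208304)*s^5*N^5*u^8 + (-958010976)*s^5*N^5*u^9*e + 2695468752*s^5*N^5*u^10*e^2 + 7015021200*s^5*N^6*u^5 + (-5054594400)*s^5*N^6*u^8 + (-266429088)*s^5*N^6*u^9*e + 943839216*s^5*N^6*u^10*e^2 + 2800339776*s^5*N^7*u^5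 + (-3181560120)*s^5*N^7*u^8 + 134631720*s^5*N^7*u^9*e + 246588624*s^5*N^7*u^10*e^2 + 782281152*s^5*N^8*u^5 + (-1370409192)*s^5*N^8*u^8 + 75110328*s^5*N^8*u^9*e + 42515280*s^5*N^8*u^10*e^2 + 153055008*s^5*N^9*u^5 + (-461054592)*s^5*N^9*u^8 + 26926344*s^5*N^9*u^9*e + 14171760*s^5*N^10*u^5 + (-110539728)*s^5*N^10*u^8 + 7085880*s^5*N^10*u^9*e + (-18423288)*s^5*N^11*u^8 + (-2361960)*s^5*N^12*u^8 + (-1224440064)*s^6*N^2*u^5 + (-2652953472)*s^6*N^2*u^6*e + (-3310523136)*s^6*N^3*u^5 + (-2627444304)*s^6*N^3*u^6*e + (-4108393224)*s^6*N^4*u^5 + (-803538792)*s^6*N^4*u^6*e + (-2511235872)*s^6*N^5*u^5 + (-204073344)*s^6*N^5*u^6*e + (-826567902)*s^6*N^6*u^5 + (-63772920)*s^6*N^6*u^6*e + (-199113228)*s^6*N^7*u^5 + (-33657930)*s^6*N^8*u^5 + (-229582512)*s^7*N*u^2 + 114791256*s^7*N*u^5 + (-51018336)*s^7*N*u^6*e + (-344373768)*s^7*N*u^7*e^2 + (-573956280)*s^7*N^2*u^2 + 352876824*s^7*N^2*u^5 + (-38263752)*s^7*N^2*u^6*e + (-344373768)*s^7*N^2*u^7*e^2 + (-459165024)*s^7*N^3*u^2 + 499554540*s^7*N^3*u^5 + (-95659380)*s^7*N^3*u^6*e + (-114791256)*s^7*N^4*u^2 + 299732724*s^7*N^4*u^5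 + (-108413964)*s^7*N^4*u^6*e + 53144100*s^7*N^5*u^5 + 14880348*s^7*N^6*u^5 + 114791256*s^8*u^2 + 172186884*s^8*u^3*e + 200884698*s^8*N*u^2 + 129140163*s^8*N^2*u^2 + 34828517376*c*N^8*u^12 + 148343685120*c*N^9*u^12 + 293050441728*c*N^10*u^12 + 362924568576*c*N^11*u^12 + 322215272704*c*N^12*u^12 + 221601916416*c*N^13*u^12 + 123509036928*c*N^14*u^12 + 57195352192*c*N^15*u^12 + 22330913040*c*N^16*u^12 + 7409960064*c*N^17*u^12 + 2091407424*c*N^18*u^12 + 499473792*c*N^19*u^12 + 99805536*c*N^20*u^12 + 16286080*c*N^21*u^12 + 2078400*c*N^22*u^12 + 192000*c*N^23*u^12 + 10000*c*N^24*u^12 + (-26121388032)*c*s^2*N^6*u^9 + (-83443322880)*c*s^2*N^7*u^9 + (-120415030272)*c*s^2*N^8*u^9 + (-107462225664)*c*s^2*N^9*u^9 + (-68857444224)*c*s^2*N^10*u^9 + (-34286607936)*c*s^2*N^11*u^9 + (-13661008992)*c*s^2*N^12*u^9 + (-4401806976)*c*s^2*N^13*u^9 + (-1155179232)*c*s^2*N^14*u^9 + (-242906688)*c*s^2*N^15*u^9 + (-39307680)*c*s^2*N^16*u^9 + (-4665600)*c*s^2*N^17*u^9 + (-324000)*c*s^2*N^18*u^9 + (-9795520512)*c*s^3*N^5*u^10*e + 1632586752*c*s^3*N^6*u^9 + (-30656351232)*c*s^3*N^6*u^10*e + 4293098496*c*s^3*N^7*u^9 + (-39858127488)*c*s^3*N^7*u^10*e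 + 4088325312*c*s^3*N^8*u^9 + (-29576358144)*c*s^3*N^8*u^10*e + 1607882400*c*s^3*N^9*u^9 + (-14939554464)*c*s^3*N^9*u^10*e + 25229232*c*s^3*N^10*u^9 + (-5720142240)*c*s^3*N^10*u^10*e + (-291605832)*c*s^3*N^11*u^9 + (-1663239744)*c*s^3*N^11*u^10*e + (-199471896)*c*s^3*N^12*u^9 + (-353979072)*c*s^3*N^12*u^10*e + (-79606800)*c*s^3*N^13*u^9 + (-55637280)*c*s^3*N^13*u^10*e + (-20225376)*c*s^3*N^14*u^9 + (-5248800)*c*s^3*N^14*u^10*e + (-3761640)*c*s^3*N^15*u^9 + (-437400)*c*s^3*N^16*u^9 + 6802444800*c*s^4*N^4*u^6 + 13433568768*c*s^4*N^5*u^6 + 10657793376*c*s^4*N^6*u^6 + 4933662048*c*s^4*N^7*u^6 + 1839336984*c*s^4*N^8*u^6 + 581357088*c*s^4*N^9*u^6 + 129435408*c*s^4*N^10*u^6 + 25194240*c*s^4*N^11*u^6 + 3936600*c*s^4*N^12*u^6 + 272097792*c*s^5*N^3*u^6 + 3673320192*c*s^5*N^3*u^7*e + 493807104*c*s^5*N^4*u^6 + 7584725952*c*s^5*N^4*u^7*e + 837078624*c*s^5*N^5*u^6 + 5390937504*c*s^5*N^5*u^7*e + 1233887904*c*s^5*N^6*u^6 + 1887678432*c*s^5*N^6*u^7*e + 850148136*c*s^5*N^7*u^6 + 493177248*c*s^5*N^7*u^7*e + 294300216*c*s^5*N^8*u^6 + 85030560*c*s^5*N^8*u^7*e + 76055112*c*s^5*N^9*u^6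 + 13384440*c*s^5*N^10*u^6 + (-816293376)*c*s^6*N^2*u^3 + (-38263752)*c*s^6*N^2*u^6 + 114791256*c*s^6*N^2*u^8*e^2 + (-633477672)*c*s^6*N^3*u^3 + (-153055008)*c*s^6*N^3*u^6 + (-38263752)*c*s^6*N^3*u^7*e + 229582512*c*s^6*N^3*u^8*e^2 + 51018336*c*s^6*N^4*u^3 + (-274223556)*c*s^6*N^4*u^6 + (-57395628)*c*s^6*N^4*u^7*e + 114791256*c*s^6*N^4*u^8*e^2 + 114791256*c*s^6*N^5*u^3 + (-255091680)*c*s^6*N^5*u^6 + 17006112*c*s^6*N^6*u^3 + (-114791256)*c*s^6*N^6*u^6 + 19131876*c*s^6*N^6*u^7*e + (-25509168)*c*s^6*N^7*u^6 + (-6377292)*c*s^6*N^8*u^6 + (-51018336)*c*s^7*N*u^3 + (-344373768)*c*s^7*N*u^4*e + (-95659380)*c*s^7*N^2*u^3 + (-344373768)*c*s^7*N^2*u^4*e + (-124357194)*c*s^7*N^3*u^3 + (-79716150)*c*s^7*N^4*u^3 + 43046721*c*s^8 + 17414258688*c^2*s*N^7*u^10 + 73043140608*c^2*s*N^8*u^10 + 135905568768*c^2*s*N^9*u^10 + 151918170624*c^2*s*N^10*u^10 + 117546446592*c^2*s*N^11*u^10 + 68762701440*c^2*s*N^12*u^10 + 31965077952*c^2*s*N^13*u^10 + 12041877312*c^2*s*N^14*u^10 + 3704657472*c^2*s*N^15*u^10 + 932057280*c^2*s*N^16*u^10 + 188142912*c^2*s*N^17*u^10 + 29315520*c^2*s*N^18*u^10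 + 3326400*c^2*s*N^19*u^10 + 216000*c^2*s*N^20*u^10 + (-9795520512)*c^2*s^3*N^5*u^7 + (-30656351232)*c^2*s^3*N^6*u^7 + (-39858127488)*c^2*s^3*N^7*u^7 + (-29576358144)*c^2*s^3*N^8*u^7 + (-14939554464)*c^2*s^3*N^9*u^7 + (-5720142240)*c^2*s^3*N^10*u^7 + (-1663239744)*c^2*s^3*N^11*u^7 + (-353979072)*c^2*s^3*N^12*u^7 + (-55637280)*c^2*s^3*N^13*u^7 + (-5248800)*c^2*s^3*N^14*u^7 + (-1224440064)*c^2*s^4*N^4*u^8*e + 204073344*c^2*s^4*N^5*u^7 + (-3752682048)*c^2*s^4*N^5*u^8*e + 523410336*c^2*s^4*N^6*u^7 + (-4325221152)*c^2*s^4*N^6*u^8*e + 408146688*c^2*s^4*N^7*u^7 + (-2426205312)*c^2*s^4*N^7*u^8*e + 43932456*c^2*s^4*N^8*u^7 + (-793618560)*c^2*s^4*N^8*u^8*e + (-69914016)*c^2*s^4*N^9*u^7 + (-192735936)*c^2*s^4*N^9*u^8*e + (-34012224)*c^2*s^4*N^10*u^7 + (-28343520)*c^2*s^4*N^10*u^8*e + (-11337408)*c^2*s^4*N^11*u^7 + (-2361960)*c^2*s^4*N^12*u^7 + 1819653984*c^2*s^5*N^3*u^4 + 3724338528*c^2*s^5*N^4*u^4 + 2593432080*c^2*s^5*N^5*u^4 + 875814768*c^2*s^5*N^6*u^4 + 229582512*c^2*s^5*N^7*u^4 + 42515280*c^2*s^5*N^8*u^4 + 8503056*c^2*s^6*N^2*u^4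 + 229582512*c^2*s^6*N^2*u^5*e + (-4251528)*c^2*s^6*N^3*u^4 + 459165024*c^2*s^6*N^3*u^5*e + (-6377292)*c^2*s^6*N^4*u^4 + 229582512*c^2*s^6*N^4*u^5*e + 34012224*c^2*s^6*N^5*u^4 + 27634932*c^2*s^6*N^6*u^4 + (-114791256)*c^2*s^7*N*u + (-114791256)*c^2*s^7*N^2*u + 3265173504*c^3*s^2*N^6*u^8 + 13483957248*c^3*s^2*N^7*u^8 + 23504826240*c^3*s^2*N^8*u^8 + 23144828544*c^3*s^2*N^9*u^8 + 14838637536*c^3*s^2*N^10*u^8 + 6886565568*c^3*s^2*N^11*u^8 + 2461127328*c^3*s^2*N^12*u^8 + 672406272*c^3*s^2*N^13*u^8 + 136538784*c^3*s^2*N^14*u^8 + 20295360*c^3*s^2*N^15*u^8 + 1749600*c^3*s^2*N^16*u^8 + (-1224440064)*c^3*s^4*N^4*u^5 + (-3752682048)*c^3*s^4*N^5*u^5 + (-4325221152)*c^3*s^4*N^6*u^5 + (-2426205312)*c^3*s^4*N^7*u^5 + (-793618560)*c^3*s^4*N^8*u^5 + (-192735936)*c^3*s^4*N^9*u^5 + (-28343520)*c^3*s^4*N^10*u^5 + (-51018336)*c^3*s^5*N^3*u^6*e + 8503056*c^3*s^5*N^4*u^5 + (-153055008)*c^3*s^5*N^4*u^6*e + 21257640*c^3*s^5*N^5*u^5 + (-153055008)*c^3*s^5*N^5*u^6*e + 12754584*c^3*s^5*N^6*u^5 + (-51018336)*c^3*s^5*N^6*u^6*e + (-4251528)*c^3*s^5*N^7*u^5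 + (-4251528)*c^3*s^5*N^8*u^5 + 114791256*c^3*s^6*N^2*u^2 + 229582512*c^3*s^6*N^3*u^2 + 114791256*c^3*s^6*N^4*u^2 + 272097792*c^4*s^3*N^5*u^6 + 1106027136*c^4*s^3*N^6*u^6 + 1795089600*c^4*s^3*N^7*u^6 + 1500316992*c^4*s^3*N^8*u^6 + 715516416*c^4*s^3*N^9*u^6 + 219189888*c^4*s^3*N^10*u^6 + 49128768*c^4*s^3*N^11*u^6 + 6298560*c^4*s^3*N^12*u^6 + (-51018336)*c^4*s^5*N^3*u^3 + (-153055008)*c^4*s^5*N^4*u^3 + (-153055008)*c^4*s^5*N^5*u^3 + (-51018336)*c^4*s^5*N^6*u^3 + 8503056*c^5*s^4*N^4*u^4 + 34012224*c^5*s^4*N^5*u^4 + 51018336*c^5*s^4*N^6*u^4 + 34012224*c^5*s^4*N^7*u^4 + 8503056*c^5*s^4*N^8*u^4.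
Definition Q2 (c s N u e : R) : R :=
  14155776*s^3*u^11 + 21233664*s^3*u^12*e + (-7077888)*s^3*N*u^11 + (-10616832)*s^3*N*u^12*e + 3538944*s^3*N^2*u^11 + 5308416*s^3*N^2*u^12*e + (-1769472)*s^3*N^3*u^11 + (-2654208)*s^3*N^3*u^12*e + 884736*s^3*N^4*u^11 + 1327104*s^3*N^4*u^12*e + (-442368)*s^3*N^5*u^11 + (-13061357568)*s^3*N^5*u^12*e + 2177003520*s^3*N^6*u^11 + (-35190982656)*s^3*N^6*u^12*e + 4776717312*s^3*N^7*u^11 + (-42612023808)*s^3*N^7*u^12*e + 4169422080*s^3*N^8*u^11 + (-32425100928)*s^3*N^8*u^12*e + 1853181504*s^3*N^9*u^11 + (-18216171648)*s^3*N^9*u^12*e + 333936864*s^3*N^10*u^11 + (-8035218144)*s^3*N^10*u^12*e + (-178811280)*s^3*N^11*u^11 + (-2812895424)*s^3*N^11*u^12*e + (-200785608)*s^3*N^12*u^11 + (-794455776)*s^3*N^12*u^12*e + (-101998656)*s^3*N^13*u^11 + (-180361728)*s^3*N^13*u^12*e + (-36144360)*s^3*N^14*u^11 + (-31272480)*s^3*N^14*u^12*e + (-9818064)*s^3*N^15*u^11 + (-4017600)*s^3*N^15*u^12*e + (-1936440)*s^3*N^16*u^11 + (-324000)*s^3*N^16*u^12*e + (-280800)*s^3*N^17*u^11 + (-27000)*s^3*N^18*u^11 + 71663616*s^4*u^8 + 42467328*s^4*u^11 + 55738368*s^4*u^12*e + (-35831808)*s^4*N*u^8 + (-19464192)*s^4*N*u^11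 + (-25214976)*s^4*N*u^12*e + 17915904*s^4*N^2*u^8 + 8847360*s^4*N^2*u^11 + 11280384*s^4*N^2*u^12*e + (-8957952)*s^4*N^3*u^8 + (-3981312)*s^4*N^3*u^11 + (-4976640)*s^4*N^3*u^12*e + (-3260694528)*s^4*N^4*u^8 + 1769472*s^4*N^4*u^11 + (-6528190464)*s^4*N^4*u^12*e + (-11853609984)*s^4*N^5*u^8 + 1087617024*s^4*N^5*u^11 + (-14331396096)*s^4*N^5*u^12*e + (-17578021248)*s^4*N^6*u^8 + 1844550144*s^4*N^6*u^11 + (-14140313856)*s^4*N^6*u^12*e + (-14355817920)*s^4*N^7*u^8 + 1162435968*s^4*N^7*u^11 + (-9142393536)*s^4*N^7*u^12*e + (-7660728576)*s^4*N^8*u^8 + 345372768*s^4*N^8*u^11 + (-4536889056)*s^4*N^8*u^12*e + (-3056201280)*s^4*N^9*u^8 + (-5717952)*s^4*N^9*u^11 + (-1749164544)*s^4*N^9*u^12*e + (-933026688)*s^4*N^10*u^8 + (-86546664)*s^4*N^10*u^11 + (-531865440)*s^4*N^10*u^12*e + (-205892928)*s^4*N^11*u^8 + (-57119472)*s^4*N^11*u^11 + (-131295168)*s^4*N^11*u^12*e + (-33592320)*s^4*N^12*u^8 + (-22439592)*s^4*N^12*u^11 + (-24533280)*s^4*N^12*u^12*e + (-3499200)*s^4*N^13*u^8 + (-6852384)*s^4*N^13*u^11 + (-3369600)*s^4*N^13*u^12*e + (-1482840)*s^4*N^14*u^11 + (-324000)*s^4*N^14*u^12*e + (-226800)*s^4*N^15*u^11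 + (-27000)*s^4*N^16*u^11 + 268738560*s^5*u^8 + 80621568*s^5*u^9*e + (-39813120)*s^5*u^11 + (-79294464)*s^5*u^12*e + (-125411328)*s^5*N*u^8 + (-40310784)*s^5*N*u^9*e + 24330240*s^5*N*u^11 + 45287424*s^5*N*u^12*e + 58226688*s^5*N^2*u^8 + 20155392*s^5*N^2*u^9*e + (-14155776)*s^5*N^2*u^11 + (-25132032)*s^5*N^2*u^12*e + (-26873856)*s^5*N^3*u^8 + 7336562688*s^5*N^3*u^9*e + 7962624*s^5*N^3*u^11 + (-3251529216)*s^5*N^3*u^12*e + (-395829504)*s^5*N^4*u^8 + 11977341696*s^5*N^4*u^9*e + 539827200*s^5*N^4*u^11 + (-5539933440)*s^5*N^4*u^12*e + 1165933440*s^5*N^5*u^8 + 8259301728*s^5*N^5*u^9*e + 652361472*s^5*N^5*u^11 + (-4300190208)*s^5*N^5*u^12*e + 2740678416*s^5*N^6*u^8 + 3804645168*s^5*N^6*u^9*e + 255037248*s^5*N^6*u^11 + (-2421101664)*s^5*N^6*u^12*e + 2083563648*s^5*N^7*u^8 + 1368047232*s^5*N^7*u^9*e + 45167760*s^5*N^7*u^11 + (-1057893696)*s^5*N^7*u^12*e + 989530020*s^5*N^8*u^8 + 335713248*s^5*N^8*u^9*e + (-25442856)*s^5*N^8*u^11 + (-345635424)*s^5*N^8*u^12*e + 371859984*s^5*N^9*u^8 + 59836320*s^5*N^9*u^9*e + (-30551904)*s^5*N^9*u^11 + (-93115008)*s^5*N^9*u^12*e + 94355928*s^5*N^10*u^8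 + 7873200*s^5*N^10*u^9*e + (-13283784)*s^5*N^10*u^11 + (-19090080)*s^5*N^10*u^12*e + 16971120*s^5*N^11*u^8 + (-4577904)*s^5*N^11*u^11 + (-2721600)*s^5*N^11*u^12*e + 2405700*s^5*N^12*u^8 + (-1137240)*s^5*N^12*u^11 + (-324000)*s^5*N^12*u^12*e + (-172800)*s^5*N^13*u^11 + (-27000)*s^5*N^14*u^11 + 90699264*s^6*u^5 + 296172288*s^6*u^8 + (-60466176)*s^6*u^9*e + (-136048896)*s^6*u^10*e^2 + (-150128640)*s^6*u^11 + (-192637440)*s^6*u^12*e + (-45349632)*s^6*N*u^5 + (-118972800)*s^6*N*u^8 + 40310784*s^6*N*u^9*e + 68024448*s^6*N*u^10*e^2 + 67986432*s^6*N*u^11 + 83752704*s^6*N*u^12*e + 1247114880*s^6*N^2*u^5 + (-260060544)*s^6*N^2*u^8 + 3648125952*s^6*N^2*u^9*e + 884317824*s^6*N^2*u^10*e^2 + (-30011904)*s^6*N^2*u^11 + (-1667640960)*s^6*N^2*u^12*e + 3435234624*s^6*N^3*u^5 + (-1312165008)*s^6*N^3*u^8 + 3858497856*s^6*N^3*u^9*e + 1454022576*s^6*N^3*u^10*e^2 + 284919552*s^6*N^3*u^11 + (-1936146240)*s^6*N^3*u^12*e + 3545774352*s^6*N^4*u^5 + (-1137554928)*s^6*N^4*u^8 + 1721396448*s^6*N^4*u^9*e + 620723088*s^6*N^4*u^10*e^2 + 183720960*s^6*N^4*u^11 + (-1182021984)*s^6*N^4*u^12*e + 1734623424*s^6*N^5*u^5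 + (-588180528)*s^6*N^5*u^8 + 908409816*s^6*N^5*u^9*e + 161558064*s^6*N^5*u^10*e^2 + 35658144*s^6*N^5*u^11 + (-619539840)*s^6*N^5*u^12*e + 532858176*s^6*N^6*u^5 + (-254907972)*s^6*N^6*u^8 + 297134568*s^6*N^6*u^9*e + 42515280*s^6*N^6*u^10*e^2 + 4754808*s^6*N^6*u^11 + (-219176928)*s^6*N^6*u^12*e + 124711488*s^6*N^7*u^5 + (-62985600)*s^6*N^7*u^8 + 56844504*s^6*N^7*u^9*e + (-15098832)*s^6*N^7*u^11 + (-63229248)*s^6*N^7*u^12*e + 14171760*s^6*N^8*u^5 + (-13104504)*s^6*N^8*u^8 + 14959080*s^6*N^8*u^9*e + (-7726536)*s^6*N^8*u^11 + (-14942880)*s^6*N^8*u^12*e + (-1539648)*s^6*N^9*u^8 + (-2778624)*s^6*N^9*u^11 + (-2073600)*s^6*N^9*u^12*e + 43740*s^6*N^10*u^8 + (-899640)*s^6*N^10*u^11 + (-324000)*s^6*N^10*u^12*e + (-118800)*s^6*N^11*u^11 + (-27000)*s^6*N^12*u^11 + 170061120*s^7*u^5 + (-173910240)*s^7*u^8 + (-558052416)*s^7*u^9*e + (-153055008)*s^7*u^10*e^2 + 73042560*s^7*u^11 + 175519872*s^7*u^12*e + (-73693152)*s^7*N*u^5 + (-1326476736)*s^7*N*u^6*e + (-43075152)*s^7*N*u^8 + 2103089184*s^7*N*u^9*e + 518686416*s^7*N*u^10*e^2 + (-51527232)*s^7*N*u^11 + (-921580416)*s^7*N*u^12*e + 99202320*s^7*N^2*u^5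 + (-650483784)*s^7*N^2*u^6*e + (-634544928)*s^7*N^2*u^8 + 877704336*s^7*N^2*u^9*e + 467668080*s^7*N^2*u^10*e^2 + 168223392*s^7*N^2*u^11 + (-507282912)*s^7*N^2*u^12*e + (-330910596)*s^7*N^3*u^5 + (-76527504)*s^7*N^3*u^6*e + (-251505000)*s^7*N^3*u^8 + 421846056*s^7*N^3*u^9*e + 76527504*s^7*N^3*u^10*e^2 + 7748784*s^7*N^3*u^11 + (-337369536)*s^7*N^3*u^12*e + (-222850926)*s^7*N^4*u^5 + (-63772920)*s^7*N^4*u^6*e + (-168337764)*s^7*N^4*u^8 + 243281880*s^7*N^4*u^9*e + 42515280*s^7*N^4*u^10*e^2 + 13954680*s^7*N^4*u^11 + (-141085152)*s^7*N^4*u^12*e + (-35429400)*s^7*N^5*u^5 + (-43285104)*s^7*N^5*u^8 + 26926344*s^7*N^5*u^9*e + (-4599936)*s^7*N^5*u^11 + (-39045888)*s^7*N^5*u^12*e + (-19486170)*s^7*N^6*u^5 + (-9850248)*s^7*N^6*u^8 + 14959080*s^7*N^6*u^9*e + (-5249448)*s^7*N^6*u^11 + (-12091680)*s^7*N^6*u^12*e + (-1627128)*s^7*N^7*u^8 + (-1238544)*s^7*N^7*u^11 + (-1425600)*s^7*N^7*u^12*e + 43740*s^7*N^8*u^8 + (-770040)*s^7*N^8*u^11 + (-324000)*s^7*N^8*u^12*e + (-64800)*s^7*N^9*u^11 + (-27000)*s^7*N^10*u^11 + (-114791256)*s^8*u^2 + (-43046721)*s^8*u^3*e + 283435200*s^8*u^5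 + (-717445350)*s^8*u^6*e + (-258280326)*s^8*u^7*e^2 + (-841411071)*s^8*u^8 + 469872576*s^8*u^9*e + 298138401*s^8*u^10*e^2 + 153086112*s^8*u^11 + 14348907*s^8*u^11*e^3 + (-253101024)*s^8*u^12*e + (-200884698)*s^8*N*u^2 + (-30469284)*s^8*N*u^5 + 86093442*s^8*N*u^6*e + 220615812*s^8*N*u^8 + 117822438*s^8*N*u^9*e + (-8503056)*s^8*N*u^10*e^2 + 7568640*s^8*N*u^11 + (-127090944)*s^8*N*u^12*e + (-129140163)*s^8*N^2*u^2 + 89990676*s^8*N^2*u^5 + (-114791256)*s^8*N^2*u^6*e + (-197796654)*s^8*N^2*u^8 + 126502641*s^8*N^2*u^9*e + 28166373*s^8*N^2*u^10*e^2 + 90072*s^8*N^2*u^11 + (-105139296)*s^8*N^2*u^12*e + 7794468*s^8*N^3*u^5 + 11009358*s^8*N^3*u^8 + 3385476*s^8*N^3*u^9*e + 6932304*s^8*N^3*u^11 + (-17972928)*s^8*N^3*u^12*e + 4960116*s^8*N^4*u^5 + (-24490026)*s^8*N^4*u^8 + 6987465*s^8*N^4*u^9*e + (-5766120)*s^8*N^4*u^11 + (-10536480)*s^8*N^4*u^12*e + (-651726)*s^8*N^5*u^8 + 258336*s^8*N^5*u^11 + (-777600)*s^8*N^5*u^12*e + (-1019142)*s^8*N^6*u^8 + (-748440)*s^8*N^6*u^11 + (-324000)*s^8*N^6*u^12*e + (-10800)*s^8*N^7*u^11 + (-27000)*s^8*N^8*u^11 + 94242204*s^9*u^5 + (-114791256)*s^9*u^6*e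 + (-328867938)*s^9*u^8 + 147681549*s^9*u^9*e + 28166373*s^9*u^10*e^2 + (-52263144)*s^9*u^11 + (-110302560)*s^9*u^12*e + (-2125764)*s^9*N*u^5 + 65535642*s^9*N*u^8 + (-10589454)*s^9*N*u^9*e + 26176608*s^9*N*u^11 + 2581632*s^9*N*u^12*e + 4960116*s^9*N^2*u^5 + (-27263142)*s^9*N^2*u^8 + 6987465*s^9*N^2*u^9*e + (-9622152)*s^9*N^2*u^11 + (-10277280)*s^9*N^2*u^12*e + 1386558*s^9*N^3*u^8 + 1928016*s^9*N^3*u^11 + (-129600)*s^9*N^3*u^12*e + (-1019142)*s^9*N^4*u^8 + (-834840)*s^9*N^4*u^11 + (-324000)*s^9*N^4*u^12*e + 43200*s^9*N^5*u^11 + (-27000)*s^9*N^6*u^11 + 4960116*s^10*u^5 + (-34112826)*s^10*u^8 + 6987465*s^10*u^9*e + (-17595144)*s^10*u^11 + (-11314080)*s^10*u^12*e + 3424842*s^10*N*u^8 + 3986496*s^10*N*u^11 + 518400*s^10*N*u^12*e + (-1019142)*s^10*N^2*u^8 + (-1029240)*s^10*N^2*u^11 + (-324000)*s^10*N^2*u^12*e + 97200*s^10*N^3*u^11 + (-27000)*s^10*N^4*u^11 + (-1019142)*s^11*u^8 + (-1331640)*s^11*u^11 + (-324000)*s^11*u^12*e + 151200*s^11*N*u^11 + (-27000)*s^11*N^2*u^11 + (-27000)*s^12*u^11 + 4194304*c*s*u^12 + (-2097152)*c*s*N*u^12 + 1048576*c*s*N^2*u^12 + (-524288)*c*s*N^3*u^12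 + 262144*c*s*N^4*u^12 + (-131072)*c*s*N^5*u^12 + 65536*c*s*N^6*u^12 + 17414225920*c*s*N^7*u^12 + 65464729600*c*s*N^8*u^12 + 113792856064*c*s*N^9*u^12 + 124565856256*c*s*N^10*u^12 + 98824708224*c*s*N^11*u^12 + 61388604096*c*s*N^12*u^12 + 31060216416*c*s*N^13*u^12 + 13067567888*c*s*N^14*u^12 + 4631672576*c*s*N^15*u^12 + 1389143744*c*s*N^16*u^12 + 351131840*c*s*N^17*u^12 + 74170976*c*s*N^18*u^12 + 12817280*c*s*N^19*u^12 + 1734400*c*s*N^20*u^12 + 172000*c*s*N^21*u^12 + 10000*c*s*N^22*u^12 + 15728640*c*s^2*u^12 + (-7340032)*c*s^2*N*u^12 + 3407872*c*s^2*N^2*u^12 + (-1572864)*c*s^2*N^3*u^12 + 720896*c*s^2*N^4*u^12 + (-327680)*c*s^2*N^5*u^12 + 8707276800*c*s^2*N^6*u^12 + 28378726400*c*s^2*N^7*u^12 + 42707064832*c*s^2*N^8*u^12 + 40929395712*c*s^2*N^9*u^12 + 28947656256*c*s^2*N^10*u^12 + 16220473920*c*s^2*N^11*u^12 + 7419871248*c*s^2*N^12*u^12 + 2823848320*c*s^2*N^13*u^12 + 903912128*c*s^2*N^14*u^12 + 242615808*c*s^2*N^15*u^12 + 54258016*c*s^2*N^16*u^12 + 9956480*c*s^2*N^17*u^12 + 1430400*c*s^2*N^18*u^12 + 152000*c*s^2*N^19*u^12 + 10000*c*s^2*N^20*u^12 + 21233664*c*s^3*u^9 + (-11141120)*c*s^3*u^12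 + (-10616832)*c*s^3*N*u^9 + 7274496*c*s^3*N*u^12 + 5308416*c*s^3*N^2*u^9 + (-4423680)*c*s^3*N^2*u^12 + (-2654208)*c*s^3*N^3*u^9 + 2572288*c*s^3*N^3*u^12 + 1327104*c*s^3*N^4*u^9 + (-1449984)*c*s^3*N^4*u^12 + (-13061357568)*c*s^3*N^5*u^9 + 4354363392*c*s^3*N^5*u^12 + (-35190982656)*c*s^3*N^6*u^9 + 12012181504*c*s^3*N^6*u^12 + (-42612023808)*c*s^3*N^7*u^9 + 15347441664*c*s^3*N^7*u^12 + (-32425100928)*c*s^3*N^8*u^9 + 12790977024*c*s^3*N^8*u^12 + (-18216171648)*c*s^3*N^9*u^9 + 8078339616*c*s^3*N^9*u^12 + (-8035218144)*c*s^3*N^10*u^9 + 4071067152*c*s^3*N^10*u^12 + (-2812895424)*c*s^3*N^11*u^9 + 1674402048*c*s^3*N^11*u^12 + (-794455776)*c*s^3*N^12*u^9 + 574723136*c*s^3*N^12*u^12 + (-180361728)*c*s^3*N^13*u^9 + 164594496*c*s^3*N^13*u^12 + (-31272480)*c*s^3*N^14*u^9 + 39010656*c*s^3*N^14*u^12 + (-4017600)*c*s^3*N^15*u^9 + 7623680*c*s^3*N^15*u^12 + (-324000)*c*s^3*N^16*u^9 + 1166400*c*s^3*N^16*u^12 + 132000*c*s^3*N^17*u^12 + 10000*c*s^3*N^18*u^12 + (-15925248)*c*s^4*u^9 + (-107495424)*c*s^4*u^10*e + (-77398016)*c*s^4*u^12 + 10616832*c*s^4*N*u^9 + 53747712*c*s^4*N*u^10*e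 + 36487168*c*s^4*N*u^12 + (-6635520)*c*s^4*N^2*u^9 + (-26873856)*c*s^4*N^2*u^10*e + (-16957440)*c*s^4*N^2*u^12 + 3981312*c*s^4*N^3*u^9 + 13436928*c*s^4*N^3*u^10*e + 7753728*c*s^4*N^3*u^12 + (-6532669440)*c*s^4*N^4*u^9 + (-4904478720)*c*s^4*N^4*u^10*e + 2173304832*c*s^4*N^4*u^12 + (-13512863232)*c*s^4*N^5*u^9 + (-12875936256)*c*s^4*N^5*u^10*e + 4919438336*c*s^4*N^5*u^12 + (-12403031040)*c*s^4*N^6*u^9 + (-13491095616)*c*s^4*N^6*u^10*e + 5214001664*c*s^4*N^6*u^12 + (-7966872288)*c*s^4*N^7*u^9 + (-8042631264)*c*s^4*N^7*u^10*e + 3788487680*c*s^4*N^7*u^12 + (-4320708480)*c*s^4*N^8*u^9 + (-3448461600)*c*s^4*N^8*u^10*e + 2144925968*c*s^4*N^8*u^12 + (-1844640216)*c*s^4*N^9*u^9 + (-1135840320)*c*s^4*N^9*u^10*e + 963070592*c*s^4*N^9*u^12 + (-629930520)*c*s^4*N^10*u^9 + (-263699712)*c*s^4*N^10*u^10*e + 355665728*c*s^4*N^10*u^12 + (-181998576)*c*s^4*N^11*u^9 + (-45139680)*c*s^4*N^11*u^10*e + 109528704*c*s^4*N^11*u^12 + (-38984976)*c*s^4*N^12*u^9 + (-5248800)*c*s^4*N^12*u^10*e + 27532896*c*s^4*N^12*u^12 + (-6256440)*c*s^4*N^13*u^9 + 5738880*c*s^4*N^13*u^12 + (-761400)*c*s^4*N^14*u^9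 + 942400*c*s^4*N^14*u^12 + 112000*c*s^4*N^15*u^12 + 10000*c*s^4*N^16*u^12 + (-40310784)*c*s^5*u^6 + (-267411456)*c*s^5*u^9 + (-241864704)*c*s^5*u^10*e + 18490368*c*s^5*u^12 + 20155392*c*s^5*N*u^6 + 130387968*c*s^5*N*u^9 + 107495424*c*s^5*N*u^10*e + (-17723904)*c*s^5*N*u^12 + (-10077696)*c*s^5*N^2*u^6 + (-63203328)*c*s^5*N^2*u^9 + (-47029248)*c*s^5*N^2*u^10*e + 12738816*c*s^5*N^2*u^12 + 3406261248*c*s^5*N^3*u^6 + (-3234733056)*c*s^5*N^3*u^9 + (-2428724736)*c*s^5*N^3*u^10*e + 1080283008*c*s^5*N^3*u^12 + 5013653760*c*s^5*N^4*u^6 + (-5139065088)*c*s^5*N^4*u^9 + (-5223605760)*c*s^5*N^4*u^10*e + 1919577664*c*s^5*N^4*u^12 + 2822069808*c*s^5*N^5*u^6 + (-3631982976)*c*s^5*N^5*u^9 + (-4133744928)*c*s^5*N^5*u^10*e + 1647212000*c*s^5*N^5*u^12 + 1055796120*c*s^5*N^6*u^6 + (-2167444656)*c*s^5*N^6*u^9 + (-1954443168)*c*s^5*N^6*u^10*e + 1070637840*c*s^5*N^6*u^12 + 391770432*c*s^5*N^7*u^6 + (-1076631912)*c*s^5*N^7*u^9 + (-747009216)*c*s^5*N^7*u^10*e + 537144064*c*s^5*N^7*u^12 + 94793328*c*s^5*N^8*u^6 + (-384004152)*c*s^5*N^8*u^9 + (-194415552)*c*s^5*N^8*u^10*e + 212963264*c*s^5*N^8*u^12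 + 17321040*c*s^5*N^9*u^6 + (-122963184)*c*s^5*N^9*u^9 + (-34642080)*c*s^5*N^9*u^10*e + 71351232*c*s^5*N^9*u^12 + 3936600*c*s^5*N^10*u^6 + (-29517696)*c*s^5*N^10*u^9 + (-5248800)*c*s^5*N^10*u^10*e + 19088736*c*s^5*N^10*u^12 + (-4733640)*c*s^5*N^11*u^9 + 4222080*c*s^5*N^11*u^12 + (-761400)*c*s^5*N^12*u^9 + 758400*c*s^5*N^12*u^12 + 92000*c*s^5*N^13*u^12 + 10000*c*s^5*N^14*u^12 + (-219189888)*c*s^6*u^6 + (-204073344)*c*s^6*u^7*e + (-423304704)*c*s^6*u^9 + 74323008*c*s^6*u^10*e + 68024448*c*s^6*u^11*e^2 + 145231104*c*s^6*u^12 + 34012224*c*s^6*u^12*e^3 + 104556096*c*s^6*N*u^6 + 102036672*c*s^6*N*u^7*e + 180050688*c*s^6*N*u^9 + 398488896*c*s^6*N*u^10*e + (-34012224)*c*s^6*N*u^11*e^2 + (-66246144)*c*s^6*N*u^12 + (-476171136)*c*s^6*N*u^12*e^3 + 229582512*c*s^6*N^2*u^3 + 868571424*c*s^6*N^2*u^6 + 1326476736*c*s^6*N^2*u^7*e + (-1095171840)*c*s^6*N^2*u^9 + (-6351048)*c*s^6*N^2*u^10*e + 246588624*c*s^6*N^2*u^11*e^2 + 573264576*c*s^6*N^2*u^12 + (-250840152)*c*s^6*N^2*u^12*e^3 + 244462860*c*s^6*N^3*u^3 + 958955760*c*s^6*N^3*u^6 + 2181033864*c*s^6*N^3*u^7*e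 + (-910880640)*c*s^6*N^3*u^9 + (-450976896)*c*s^6*N^3*u^10*e + 6377292*c*s^6*N^3*u^11*e^2 + 673156544*c*s^6*N^3*u^12 + (-59521392)*c*s^6*N^3*u^12*e^3 + 92470734*c*s^6*N^4*u^3 + 496247796*c*s^6*N^4*u^6 + 931084632*c*s^6*N^4*u^7*e + (-488987928)*c*s^6*N^4*u^9 + (-208088676)*c*s^6*N^4*u^10*e + (-32949342)*c*s^6*N^4*u^11*e^2 + 487027728*c*s^6*N^4*u^12 + (-21257640)*c*s^6*N^4*u^12*e^3 + 25509168*c*s^6*N^5*u^3 + 406020924*c*s^6*N^5*u^6 + 242337096*c*s^6*N^5*u^7*e + (-148040136)*c*s^6*N^5*u^9 + (-120302496)*c*s^6*N^5*u^10*e + (-4251528)*c*s^6*N^5*u^11*e^2 + 291805056*c*s^6*N^5*u^12 + 5314410*c*s^6*N^6*u^3 + 160377084*c*s^6*N^6*u^6 + 63772920*c*s^6*N^6*u^7*e + (-6429942)*c*s^6*N^6*u^9 + (-38421216)*c*s^6*N^6*u^10*e + (-5314410)*c*s^6*N^6*u^11*e^2 + 122669504*c*s^6*N^6*u^12 + 35350668*c*s^6*N^7*u^6 + 3535488*c*s^6*N^7*u^9 + (-7138368)*c*s^6*N^7*u^10*e + 45146880*c*s^6*N^7*u^12 + 10235160*c*s^6*N^8*u^6 + 5404968*c*s^6*N^8*u^9 + (-1705860)*c*s^6*N^8*u^10*e + 13102176*c*s^6*N^8*u^12 + 725760*c*s^6*N^9*u^9 + 2993280*c*s^6*N^9*u^12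 + 222750*c*s^6*N^10*u^9 + 614400*c*s^6*N^10*u^12 + 72000*c*s^6*N^11*u^12 + 10000*c*s^6*N^12*u^12 + (-439482024)*c*s^7*u^6 + (-76527504)*c*s^7*u^7*e + 114791256*c*s^7*u^8*e^2 + 48988800*c*s^7*u^9 + 530181288*c*s^7*u^10*e + 51018336*c*s^7*u^11*e^2 + (-55304320)*c*s^7*u^12 + (-216827928)*c*s^7*u^12*e^3 + (-293355432)*c*s^7*N*u^3 + 634894848*c*s^7*N*u^6 + 701502120*c*s^7*N*u^7*e + (-572080320)*c*s^7*N*u^9 + (-268266168)*c*s^7*N*u^10*e + 97785144*c*s^7*N*u^11*e^2 + 314284448*c*s^7*N*u^12 + (-17006112)*c*s^7*N*u^12*e^3 + (-47829690)*c*s^7*N^2*u^3 + 85502952*c*s^7*N^2*u^6 + 720633996*c*s^7*N^2*u^7*e + 114791256*c*s^7*N^2*u^8*e^2 + (-169400160)*c*s^7*N^2*u^9 + (-91355364)*c*s^7*N^2*u^10*e + (-45703926)*c*s^7*N^2*u^11*e^2 + 179436048*c*s^7*N^2*u^12 + (-21257640)*c*s^7*N^2*u^12*e^3 + 95659380*c*s^7*N^3*u^3 + 68260644*c*s^7*N^3*u^6 + 76527504*c*s^7*N^3*u^7*e + (-159793884)*c*s^7*N^3*u^9 + (-58366656)*c*s^7*N^3*u^10*e + 6377292*c*s^7*N^3*u^11*e^2 + 153795840*c*s^7*N^3*u^12 + 22320522*c*s^7*N^4*u^3 + 41334300*c*s^7*N^4*u^6 + 82904796*c*s^7*N^4*u^7*e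 + 5876874*c*s^7*N^4*u^9 + (-30967920)*c*s^7*N^4*u^10*e + (-5314410)*c*s^7*N^4*u^11*e^2 + 69004608*c*s^7*N^4*u^12 + 2125764*c*s^7*N^5*u^6 + (-6153408)*c*s^7*N^5*u^9 + (-3726648)*c*s^7*N^5*u^10*e + 26832448*c*s^7*N^5*u^12 + 3857868*c*s^7*N^6*u^6 + 4844448*c*s^7*N^6*u^9 + (-1705860)*c*s^7*N^6*u^10*e + 9157216*c*s^7*N^6*u^12 + 280260*c*s^7*N^7*u^9 + 1972480*c*s^7*N^7*u^12 + 222750*c*s^7*N^8*u^9 + 510400*c*s^7*N^8*u^12 + 52000*c*s^7*N^9*u^12 + 10000*c*s^7*N^10*u^12 + (-43046721)*c*s^8 + (-172186884)*c*s^8*u^4*e + (-402163056)*c*s^8*u^6 + 526126590*c*s^8*u^7*e + 157837977*c*s^8*u^8*e^2 + 305721216*c*s^8*u^9 + (-95974308)*c*s^8*u^10*e + (-79716150)*c*s^8*u^11*e^2 + 45168912*c*s^8*u^12 + (-21257640)*c*s^8*u^12*e^3 + 157739562*c*s^8*N*u^6 + (-89282088)*c*s^8*N*u^7*e + (-237560688)*c*s^8*N*u^9 + 2309472*c*s^8*N*u^10*e + 17006112*c*s^8*N*u^11*e^2 + 67133568*c*s^8*N*u^12 + (-70248627)*c*s^8*N^2*u^6 + 54206982*c*s^8*N^2*u^7*e + 38883402*c*s^8*N^2*u^9 + (-30338064)*c*s^8*N^2*u^10*e + (-5314410)*c*s^8*N^2*u^11*e^2 + 43331136*c*s^8*N^2*u^12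 + 787320*c*s^8*N^3*u^6 + (-16503264)*c*s^8*N^3*u^9 + (-314928)*c*s^8*N^3*u^10*e + 12836736*c*s^8*N^3*u^12 + (-4113747)*c*s^8*N^4*u^6 + 5174928*c*s^8*N^4*u^9 + (-1705860)*c*s^8*N^4*u^10*e + 6997856*c*s^8*N^4*u^12 + (-165240)*c*s^8*N^5*u^9 + 1079680*c*s^8*N^5*u^12 + 222750*c*s^8*N^6*u^9 + 446400*c*s^8*N^6*u^12 + 32000*c*s^8*N^7*u^12 + 10000*c*s^8*N^8*u^12 + (-88278255)*c*s^9*u^6 + 54206982*c*s^9*u^7*e + 97475562*c*s^9*u^9 + (-36531648)*c*s^9*u^10*e + (-5314410)*c*s^9*u^11*e^2 + 43770048*c*s^9*u^12 + 9014814*c*s^9*N*u^6 + (-29296080)*c*s^9*N*u^9 + 3096792*c*s^9*N*u^10*e + (-219456)*c*s^9*N*u^12 + (-4113747)*c*s^9*N^2*u^6 + 6396408*c*s^9*N^2*u^9 + (-1705860)*c*s^9*N^2*u^10*e + 6528096*c*s^9*N^2*u^12 + (-610740)*c*s^9*N^3*u^9 + 234880*c*s^9*N^3*u^12 + 222750*c*s^9*N^4*u^9 + 422400*c*s^9*N^4*u^12 + 12000*c*s^9*N^5*u^12 + 10000*c*s^9*N^6*u^12 + (-4113747)*c*s^10*u^6 + 8508888*c*s^10*u^9 + (-1705860)*c*s^10*u^10*e + 7811936*c*s^10*u^12 + (-1056240)*c*s^10*N*u^9 + (-641920)*c*s^10*N*u^12 + 222750*c*s^10*N^2*u^9 + 438400*c*s^10*N^2*u^12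 + (-8000)*c*s^10*N^3*u^12 + 10000*c*s^10*N^4*u^12 + 222750*c*s^11*u^9 + 494400*c*s^11*u^12 + (-28000)*c*s^11*N*u^12 + 10000*c*s^11*N^2*u^12 + 10000*c*s^12*u^12 + (-28311552)*c^2*s^2*u^10 + 14155776*c^2*s^2*N*u^10 + (-7077888)*c^2*s^2*N^2*u^10 + 3538944*c^2*s^2*N^3*u^10 + (-1769472)*c^2*s^2*N^4*u^10 + 884736*c^2*s^2*N^5*u^10 + 8706686976*c^2*s^2*N^6*u^10 + 32168226816*c^2*s^2*N^7*u^10 + 51868670976*c^2*s^2*N^8*u^10 + 50024749824*c^2*s^2*N^9*u^10 + 33760848384*c^2*s^2*N^10*u^10 + 17500926528*c^2*s^2*N^11*u^10 + 7232075712*c^2*s^2*N^12*u^10 + 2404900800*c^2*s^2*N^13*u^10 + 649878336*c^2*s^2*N^14*u^10 + 141089472*c^2*s^2*N^15*u^10 + 23526720*c^2*s^2*N^16*u^10 + 2894400*c^2*s^2*N^17*u^10 + 216000*c^2*s^2*N^18*u^10 + (-95551488)*c^2*s^3*u^10 + 44236800*c^2*s^3*N*u^10 + (-20348928)*c^2*s^3*N^2*u^10 + 9289728*c^2*s^3*N^3*u^10 + (-4202496)*c^2*s^3*N^4*u^10 + 4355444736*c^2*s^3*N^5*u^10 + 13906391040*c^2*s^3*N^6*u^10 + 18981139968*c^2*s^3*N^7*u^10 + 15521804928*c^2*s^3*N^8*u^10 + 9119521728*c^2*s^3*N^9*u^10 + 4190702400*c^2*s^3*N^10*u^10 + 1520686656*c^2*s^3*N^11*u^10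 + 442107072*c^2*s^3*N^12*u^10 + 103885632*c^2*s^3*N^13*u^10 + 18601920*c^2*s^3*N^14*u^10 + 2462400*c^2*s^3*N^15*u^10 + 216000*c^2*s^3*N^16*u^10 + (-80621568)*c^2*s^4*u^7 + (-24385536)*c^2*s^4*u^10 + 53747712*c^2*s^4*u^11*e + 40310784*c^2*s^4*u^12*e^2 + 40310784*c^2*s^4*N*u^7 + 2018304*c^2*s^4*N*u^10 + (-26873856)*c^2*s^4*N*u^11*e + (-20155392)*c^2*s^4*N*u^12*e^2 + (-20155392)*c^2*s^4*N^2*u^7 + 3635712*c^2*s^4*N^2*u^10 + 13436928*c^2*s^4*N^2*u^11*e + 10077696*c^2*s^4*N^2*u^12*e^2 + 10077696*c^2*s^4*N^3*u^7 + (-1228359168)*c^2*s^4*N^3*u^10 + (-6718464)*c^2*s^4*N^3*u^11*e + 3668281344*c^2*s^4*N^3*u^12*e^2 + (-3678359040)*c^2*s^4*N^4*u^7 + (-2264582016)*c^2*s^4*N^4*u^10 + (-1221080832)*c^2*s^4*N^4*u^11*e + 5988670848*c^2*s^4*N^4*u^12*e^2 + (-9656952192)*c^2*s^4*N^5*u^7 + (-2157336720)*c^2*s^4*N^5*u^10 + (-1384843392)*c^2*s^4*N^5*u^11*e + 4129650864*c^2*s^4*N^5*u^12*e^2 + (-10118321712)*c^2*s^4*N^6*u^7 + (-1560423528)*c^2*s^4*N^6*u^10 + (-378438480)*c^2*s^4*N^6*u^11*e + 1902322584*c^2*s^4*N^6*u^12*e^2 + (-6031973448)*c^2*s^4*N^7*u^7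 + (-867088584)*c^2*s^4*N^7*u^10 + 54167616*c^2*s^4*N^7*u^11*e + 684023616*c^2*s^4*N^7*u^12*e^2 + (-2586346200)*c^2*s^4*N^8*u^7 + (-358091388)*c^2*s^4*N^8*u^10 + 89045892*c^2*s^4*N^8*u^11*e + 167856624*c^2*s^4*N^8*u^12*e^2 + (-851880240)*c^2*s^4*N^9*u^7 + (-121002336)*c^2*s^4*N^9*u^10 + 58051728*c^2*s^4*N^9*u^11*e + 29918160*c^2*s^4*N^9*u^12*e^2 + (-197774784)*c^2*s^4*N^10*u^7 + (-31674348)*c^2*s^4*N^10*u^10 + 18003384*c^2*s^4*N^10*u^11*e + 3936600*c^2*s^4*N^10*u^12*e^2 + (-33854760)*c^2*s^4*N^11*u^7 + (-6080616)*c^2*s^4*N^11*u^10 + 3674160*c^2*s^4*N^11*u^11*e + (-3936600)*c^2*s^4*N^12*u^7 + (-951588)*c^2*s^4*N^12*u^10 + 656100*c^2*s^4*N^12*u^11*e + (-69120)*c^2*s^4*N^13*u^10 + (-2700)*c^2*s^4*N^14*u^10 + (-60466176)*c^2*s^5*u^7 + 181398528*c^2*s^5*u^8*e + 171942912*c^2*s^5*u^10 + 100776960*c^2*s^5*u^11*e + 60466176*c^2*s^5*u^12*e^2 + 20155392*c^2*s^5*N*u^7 + (-90699264)*c^2*s^5*N*u^8*e + (-84153600)*c^2*s^5*N*u^10 + (-43670016)*c^2*s^5*N*u^11*e + (-25194240)*c^2*s^5*N*u^12*e^2 + (-5038848)*c^2*s^5*N^2*u^7 + 45349632*c^2*s^5*N^2*u^8*e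 + (-572102784)*c^2*s^5*N^2*u^10 + 18475776*c^2*s^5*N^2*u^11*e + 1846737792*c^2*s^5*N^2*u^12*e^2 + (-1836660096)*c^2*s^5*N^3*u^7 + (-634894848)*c^2*s^5*N^3*u^8*e + (-846239616)*c^2*s^5*N^3*u^10 + (-619778304)*c^2*s^5*N^3*u^11*e + 2070966528*c^2*s^5*N^3*u^12*e^2 + (-3808109376)*c^2*s^5*N^4*u^7 + (-1558893600)*c^2*s^5*N^4*u^8*e + (-655548552)*c^2*s^5*N^4*u^10 + (-382532544)*c^2*s^5*N^4*u^11*e + 1029342168*c^2*s^5*N^4*u^12*e^2 + (-2893401000)*c^2*s^5*N^5*u^7 + (-1383163776)*c^2*s^5*N^5*u^8*e + (-452437488)*c^2*s^5*N^5*u^10 + 2047032*c^2*s^5*N^5*u^11*e + 436490208*c^2*s^5*N^5*u^12*e^2 + (-1365212880)*c^2*s^5*N^6*u^7 + (-521520768)*c^2*s^5*N^6*u^8*e + (-207325548)*c^2*s^5*N^6*u^10 + 26060292*c^2*s^5*N^6*u^11*e + 123766704*c^2*s^5*N^6*u^12*e^2 + (-588600432)*c^2*s^5*N^7*u^7 + (-136048896)*c^2*s^5*N^7*u^8*e + (-75382920)*c^2*s^5*N^7*u^10 + 31492800*c^2*s^5*N^7*u^11*e + 22044960*c^2*s^5*N^7*u^12*e^2 + (-166596912)*c^2*s^5*N^8*u^7 + (-28343520)*c^2*s^5*N^8*u^8*e + (-22809708)*c^2*s^5*N^8*u^10 + 13279464*c^2*s^5*N^8*u^11*e + 3936600*c^2*s^5*N^8*u^12*e^2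 + (-32595048)*c^2*s^5*N^9*u^7 + (-4432320)*c^2*s^5*N^9*u^10 + 2361960*c^2*s^5*N^9*u^11*e + (-6298560)*c^2*s^5*N^10*u^7 + (-824148)*c^2*s^5*N^10*u^10 + 656100*c^2*s^5*N^10*u^11*e + (-63720)*c^2*s^5*N^11*u^10 + (-2700)*c^2*s^5*N^12*u^10 + (-34012224)*c^2*s^6*u^4 + 279656064*c^2*s^6*u^7 + 476171136*c^2*s^6*u^8*e + 102036672*c^2*s^6*u^9*e^2 + 139120416*c^2*s^6*u^10 + (-163762560)*c^2*s^6*u^11*e + (-142977312)*c^2*s^6*u^12*e^2 + 17006112*c^2*s^6*N*u^4 + 316817568*c^2*s^6*N*u^7 + (-215410752)*c^2*s^6*N*u^8*e + (-1428513408)*c^2*s^6*N*u^9*e^2 + (-355611600)*c^2*s^6*N*u^10 + 91119168*c^2*s^6*N*u^11*e + 994857552*c^2*s^6*N*u^12*e^2 + 442158912*c^2*s^6*N^2*u^4 + 330516936*c^2*s^6*N^2*u^7 + 249422976*c^2*s^6*N^2*u^8*e + (-752520456)*c^2*s^6*N^2*u^9*e^2 + (-245314008)*c^2*s^6*N^2*u^10 + (-355448736)*c^2*s^6*N^2*u^11*e + 538054488*c^2*s^6*N^2*u^12*e^2 + 692999064*c^2*s^6*N^3*u^4 + 88337304*c^2*s^6*N^3*u^7 + (-644815080)*c^2*s^6*N^3*u^8*e + (-178564176)*c^2*s^6*N^3*u^9*e^2 + (-205117272)*c^2*s^6*N^3*u^10 + (-13541904)*c^2*s^6*N^3*u^11*e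 + 245643840*c^2*s^6*N^3*u^12*e^2 + 276349320*c^2*s^6*N^4*u^4 + 142426188*c^2*s^6*N^4*u^7 + (-428695740)*c^2*s^6*N^4*u^8*e + (-63772920)*c^2*s^6*N^4*u^9*e^2 + (-123660108)*c^2*s^6*N^4*u^10 + 7794468*c^2*s^6*N^4*u^11*e + 95423184*c^2*s^6*N^4*u^12*e^2 + 63772920*c^2*s^6*N^5*u^4 + (-944784)*c^2*s^6*N^5*u^7 + (-87864912)*c^2*s^6*N^5*u^8*e + (-41832720)*c^2*s^6*N^5*u^10 + 9132912*c^2*s^6*N^5*u^11*e + 14171760*c^2*s^6*N^5*u^12*e^2 + 21257640*c^2*s^6*N^6*u^4 + (-18895680)*c^2*s^6*N^6*u^7 + (-38972340)*c^2*s^6*N^6*u^8*e + (-16775100)*c^2*s^6*N^6*u^10 + 11179944*c^2*s^6*N^6*u^11*e + 3936600*c^2*s^6*N^6*u^12*e^2 + (-2991816)*c^2*s^6*N^7*u^7 + (-3017304)*c^2*s^6*N^7*u^10 + 1049760*c^2*s^6*N^7*u^11*e + (-2755620)*c^2*s^6*N^8*u^7 + (-707508)*c^2*s^6*N^8*u^10 + 656100*c^2*s^6*N^8*u^11*e + (-58320)*c^2*s^6*N^9*u^10 + (-2700)*c^2*s^6*N^10*u^10 + (-38263752)*c^2*s^7*u^4 + 114791256*c^2*s^7*u^5*e + 943366824*c^2*s^7*u^7 + 286269552*c^2*s^7*u^8*e + (-765275040)*c^2*s^7*u^9*e^2 + (-205412760)*c^2*s^7*u^10 + (-114791256)*c^2*s^7*u^10*e^3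 + (-182973168)*c^2*s^7*u^11*e + 378071064*c^2*s^7*u^12*e^2 + 28697814*c^2*s^7*N*u + 129671604*c^2*s^7*N*u^4 + (-229897440)*c^2*s^7*N*u^7 + 153763596*c^2*s^7*N*u^8*e + 35075106*c^2*s^7*N*u^9*e^2 + (-19950624)*c^2*s^7*N*u^10 + (-86237784)*c^2*s^7*N*u^11*e + 79991712*c^2*s^7*N*u^12*e^2 + 28697814*c^2*s^7*N^2*u + 116917020*c^2*s^7*N^2*u^4 + 114791256*c^2*s^7*N^2*u^5*e + 293040504*c^2*s^7*N^2*u^7 + (-160140888)*c^2*s^7*N^2*u^8*e + (-92470734)*c^2*s^7*N^2*u^9*e^2 + (-92583324)*c^2*s^7*N^2*u^10 + 36347940*c^2*s^7*N^2*u^11*e + 82826064*c^2*s^7*N^2*u^12*e^2 + 19131876*c^2*s^7*N^3*u^4 + (-905418)*c^2*s^7*N^3*u^7 + 9211644*c^2*s^7*N^3*u^8*e + (-15538392)*c^2*s^7*N^3*u^10 + (-14276736)*c^2*s^7*N^3*u^11*e + 6298560*c^2*s^7*N^3*u^12*e^2 + 10628820*c^2*s^7*N^4*u^4 + 53655858*c^2*s^7*N^4*u^7 + (-19840464)*c^2*s^7*N^4*u^8*e + (-13147164)*c^2*s^7*N^4*u^10 + 11704824*c^2*s^7*N^4*u^11*e + 3936600*c^2*s^7*N^4*u^12*e^2 + 3582306*c^2*s^7*N^5*u^7 + (-1813968)*c^2*s^7*N^5*u^10 + (-262440)*c^2*s^7*N^5*u^11*e + 2558790*c^2*s^7*N^6*u^7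 + (-601668)*c^2*s^7*N^6*u^10 + 656100*c^2*s^7*N^6*u^11*e + (-52920)*c^2*s^7*N^7*u^10 + (-2700)*c^2*s^7*N^8*u^10 + (-65367243)*c^2*s^8*u^4 + 157837977*c^2*s^8*u^5*e + 521756964*c^2*s^8*u^7 + (-257926032)*c^2*s^8*u^8*e + (-92470734)*c^2*s^8*u^9*e^2 + (-107689500)*c^2*s^8*u^10 + 124317828*c^2*s^8*u^11*e + 85975344*c^2*s^8*u^12*e^2 + (-2125764)*c^2*s^8*N*u^4 + (-114358230)*c^2*s^8*N*u^7 + 48892572*c^2*s^8*N*u^8*e + 7553088*c^2*s^8*N*u^10 + (-43984944)*c^2*s^8*N*u^11*e + (-1574640)*c^2*s^8*N*u^12*e^2 + (-3720087)*c^2*s^8*N^2*u^4 + 56726406*c^2*s^8*N^2*u^7 + (-19840464)*c^2*s^8*N^2*u^8*e + (-11545740)*c^2*s^8*N^2*u^10 + 14854104*c^2*s^8*N^2*u^11*e + 3936600*c^2*s^8*N^2*u^12*e^2 + (-1535274)*c^2*s^8*N^3*u^7 + (-800712)*c^2*s^8*N^3*u^10 + (-1574640)*c^2*s^8*N^3*u^11*e + 2558790*c^2*s^8*N^4*u^7 + (-506628)*c^2*s^8*N^4*u^10 + 656100*c^2*s^8*N^4*u^11*e + (-47520)*c^2*s^8*N^5*u^10 + (-2700)*c^2*s^8*N^6*u^10 + (-3720087)*c^2*s^9*u^4 + 70032114*c^2*s^9*u^7 + (-19840464)*c^2*s^9*u^8*e + (-11633868)*c^2*s^9*u^10 + 20627784*c^2*s^9*u^11*e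 + 3936600*c^2*s^9*u^12*e^2 + (-6652854)*c^2*s^9*N*u^7 + 44064*c^2*s^9*N*u^10 + (-2886840)*c^2*s^9*N*u^11*e + 2558790*c^2*s^9*N^2*u^7 + (-422388)*c^2*s^9*N^2*u^10 + 656100*c^2*s^9*N^2*u^11*e + (-42120)*c^2*s^9*N^3*u^10 + (-2700)*c^2*s^9*N^4*u^10 + 2558790*c^2*s^10*u^7 + (-348948)*c^2*s^10*u^10 + 656100*c^2*s^10*u^11*e + (-36720)*c^2*s^10*N*u^10 + (-2700)*c^2*s^10*N^2*u^10 + (-2700)*c^2*s^11*u^10 + 3265173504*c^3*s^3*N^4*u^8 + 13483957248*c^3*s^3*N^5*u^8 + 23504826240*c^3*s^3*N^6*u^8 + 23144828544*c^3*s^3*N^7*u^8 + 14838637536*c^3*s^3*N^8*u^8 + 6886565568*c^3*s^3*N^9*u^8 + 2461127328*c^3*s^3*N^10*u^8 + 672406272*c^3*s^3*N^11*u^8 + 136538784*c^3*s^3*N^12*u^8 + 20295360*c^3*s^3*N^13*u^8 + 1749600*c^3*s^3*N^14*u^8 + (-1224440064)*c^3*s^5*N^2*u^5 + (-3752682048)*c^3*s^5*N^3*u^5 + (-4325221152)*c^3*s^5*N^4*u^5 + (-2426205312)*c^3*s^5*N^5*u^5 + (-793618560)*c^3*s^5*N^6*u^5 + (-192735936)*c^3*s^5*N^7*u^5 + (-28343520)*c^3*s^5*N^8*u^5 + (-51018336)*c^3*s^6*N*u^6*e + 8503056*c^3*s^6*N^2*u^5 + (-153055008)*c^3*s^6*N^2*u^6*e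 + 21257640*c^3*s^6*N^3*u^5 + (-153055008)*c^3*s^6*N^3*u^6*e + 12754584*c^3*s^6*N^4*u^5 + (-51018336)*c^3*s^6*N^4*u^6*e + (-4251528)*c^3*s^6*N^5*u^5 + (-4251528)*c^3*s^6*N^6*u^5 + 114791256*c^3*s^7*u^2 + 229582512*c^3*s^7*N*u^2 + 114791256*c^3*s^7*N^2*u^2 + 272097792*c^4*s^4*N^3*u^6 + 1106027136*c^4*s^4*N^4*u^6 + 1795089600*c^4*s^4*N^5*u^6 + 1500316992*c^4*s^4*N^6*u^6 + 715516416*c^4*s^4*N^7*u^6 + 219189888*c^4*s^4*N^8*u^6 + 49128768*c^4*s^4*N^9*u^6 + 6298560*c^4*s^4*N^10*u^6 + (-51018336)*c^4*s^6*N*u^3 + (-153055008)*c^4*s^6*N^2*u^3 + (-153055008)*c^4*s^6*N^3*u^3 + (-51018336)*c^4*s^6*N^4*u^3 + 8503056*c^5*s^5*N^2*u^4 + 34012224*c^5*s^5*N^3*u^4 + 51018336*c^5*s^5*N^4*u^4 + 34012224*c^5*s^5*N^5*u^4 + 8503056*c^5*s^5*N^6*u^4.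
Lemma poly_id c s N u e :
  Gc c s N u e = u^3 * hor (Lcoef c s N e) u + (c^3 - s) * Q1 c s N u e + (N^2 - (s - 2*N)) * Q2 c s N u e.
Proof. unfold Gc, GcP, Ph, Lcoef, Q1, Q2; simpl hor. ring. Qed.

Lemma Lcoef_0 c s N e : hor (Lcoef c s N e) 0 = 129140163 * s^9 * e.
Proof. unfold Lcoef; simpl hor. ring. Qed.

Lemma deltaR_GcP P s N u : s <> 0 -> u <> 0 ->
  deltaR ((/u)^3) N (P / (81 * s^2 * u^2)) = GcP P s N u / (6561^2 * s^8 * u^8).
Proof. intros. unfold deltaR, GcP. field. auto. Qed.

Lemma Ph_id c N u e : c <> 0 -> u <> 0 ->
  c * (/u)^2 - (/u) * (2 * N * (1 + N) / (3 * c)) + (1/3) * (6 + N + N^2)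
  - u * (2 * N^2 * (216 + 230 * N + 87 * N^2 + 24 * N^3 + 5 * N^4) / (81 * c^5)) + e * u
  = Ph c (c^3) N u e / (81 * (c^3)^2 * u^2).
Proof. intros. unfold Ph. field. auto. Qed.

Lemma u_pos m : 0 < useq m.
Proof. unfold useq. apply Rinv_0_lt_compat, Rpower_pos. Qed.

Lemma INR_u m : (1 <= m)%nat -> INR m = (/ useq m)^3.
Proof.
  intro h. unfold useq. rewrite Rinv_inv. rewrite cube_t; auto.
  apply lt_0_INR; lia.
Qed.

Section Fixn.
Variable n : nat.
Hypothesis Hn : (1 <= n)%nat.
Let N := INR n.
Let s := N * (2 + N).
Let c := Rpower s (1/3).

Lemma N_pos : 0 < N.
Proof. unfold N. apply lt_0_INR; lia. Qed.
Lemma s_pos : 0 < s.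
Proof. pose proof N_pos. unfold s. nra. Qed.
Lemma c_pos : 0 < c.
Proof. apply Rpower_pos. Qed.
Lemma c3 : c^3 = s.
Proof. apply cube_t, s_pos. Qed.
Lemma c5 : Rpower s (5/3) = c^5.
Proof.
  unfold c. rewrite <- Rpower_pow by apply Rpower_pos. rewrite Rpower_mult.
  f_equal. simpl. field.
Qed.

Lemma pstar_eq m : (1 <= m)%nat ->
  pstar_approx m n = c * (/useq m)^2 - (/useq m) * (2 * N * (1 + N) / (3 * c)) + (1/3) * (6 + N + N^2)
  - useq m * (2 * N^2 * (216 + 230 * N + 87 * N^2 + 24 * N^3 + 5 * N^4) / (81 * c^5)).
Proof.
  intro h. unfold pstar_approx. fold N. fold s. fold c. rewrite c5.
  assert (HM : 0 < INR m) by (apply lt_0_INR; lia).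
  unfold useq. rewrite Rinv_inv.
  rewrite Rpower_Ropp.
  replace (2/3) with (1/3 * INR 2) by (simpl; field).
  rewrite <- Rpower_mult. rewrite Rpower_pow by apply Rpower_pos.
  ring.
Qed.

Lemma delta_sign_id m e : (1 <= m)%nat ->
  deltaR (INR m) N (pstar_approx m n + e * useq m)
  = hor (Lcoef c s N e) (useq m) / (6561^2 * s^8 * (useq m)^5).
Proof.
  intro h. pose proof (u_pos m) as hu. pose proof c_pos. pose proof s_pos.
  rewrite pstar_eq by auto. rewrite Ph_id by lra. rewrite c3.
  rewrite (INR_u m h). rewrite deltaR_GcP by lra.
  fold (Gc c s N (useq m) e). rewrite poly_id. rewrite c3.
  replace (N^2 - (s - 2*N)) with 0 by (unfold s; ring).
  field. split; lra.
Qed.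

Lemma ev_ge1 : ev (fun m => (1 <= m)%nat).
Proof. exists 1%nat. auto. Qed.

Lemma ev_delta_pos e : 0 < e -> ev (fun m => 0 < deltaR (INR m) N (pstar_approx m n + e * useq m)).
Proof.
  intro he. pose proof s_pos.
  assert (Hh := hor_cv (Lcoef c s N e) useq useq_cv). rewrite Lcoef_0 in Hh.
  apply cv_ev_pos in Hh. 2: { apply Rmult_lt_0_compat; auto. apply Rmult_lt_0_compat. lra. apply pow_lt; auto. }
  apply (ev_impl _ _ (ev_and _ _ Hh ev_ge1)). intros m [h1 h2].
  rewrite delta_sign_id by auto. unfold Rdiv. apply Rmult_lt_0_compat; auto.
  apply Rinv_0_lt_compat. pose proof (u_pos m).
  apply Rmult_lt_0_compat. apply Rmult_lt_0_compat. lra. apply pow_lt; auto. apply pow_lt; auto.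
Qed.

Lemma ev_delta_neg e : e < 0 -> ev (fun m => deltaR (INR m) N (pstar_approx m n + e * useq m) < 0).
Proof.
  intro he. pose proof s_pos.
  assert (Hh := hor_cv (Lcoef c s N e) useq useq_cv). rewrite Lcoef_0 in Hh.
  apply cv_ev_neg in Hh.
  2: { assert (H0: 0 < 129140163 * s^9) by (apply Rmult_lt_0_compat; [lra| apply pow_lt; auto]). nra. }
  apply (ev_impl _ _ (ev_and _ _ Hh ev_ge1)). intros m [h1 h2].
  rewrite delta_sign_id by auto. unfold Rdiv.
  assert (0 < / (6561 ^ 2 * s ^ 8 * useq m ^ 5)).
  { apply Rinv_0_lt_compat. pose proof (u_pos m).
    apply Rmult_lt_0_compat. apply Rmult_lt_0_compat. lra. apply pow_lt; auto. apply pow_lt; auto. }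
  nra.
Qed.

Lemma ev_lower Y e : ev (fun m => Y < pstar_approx m n + e * useq m).
Proof.
  pose proof c_pos.
  set (l := [c; - (2 * N * (1 + N) / (3 * c)); (1/3) * (6 + N + N^2) - Y;
             e - (2 * N^2 * (216 + 230 * N + 87 * N^2 + 24 * N^3 + 5 * N^4) / (81 * c^5))]).
  assert (Hh := hor_cv l useq useq_cv).
  assert (E0 : hor l 0 = c) by (unfold l; simpl; ring).
  rewrite E0 in Hh. apply cv_ev_pos in Hh; auto.
  apply (ev_impl _ _ (ev_and _ _ Hh ev_ge1)). intros m [h1 h2].
  pose proof (u_pos m) as hu.
  assert (E : hor l (useq m) = (useq m)^2 * (pstar_approx m n + e * useq m - Y)).
  { rewrite pstar_eq by auto. unfold l; simpl. field. lra. }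
  rewrite E in h1.
  assert (0 < useq m ^2) by (apply pow_lt; auto).
  assert (0 < pstar_approx m n + e * useq m - Y).
  { destruct (Rlt_or_le 0 (pstar_approx m n + e * useq m - Y)); auto. nra. }
  lra.
Qed.

Lemma ev_conv : ev (fun m => convc (INR m) N).
Proof.
  pose proof N_pos.
  set (l := [2 * N * (1 + N); 0; 0; 22 + N * (8 + N * (3 + N)) - 3 * (8 + N*(2+N))^2 / 8]).
  assert (Hh := hor_cv l useq useq_cv).
  assert (E0 : hor l 0 = 2 * N * (1 + N)) by (unfold l; simpl; ring).
  rewrite E0 in Hh. apply cv_ev_pos in Hh; [|nra].
  apply (ev_impl _ _ (ev_and _ _ Hh ev_ge1)). intros m [h1 h2].
  pose proof (u_pos m) as hu. unfold convc. rewrite (INR_u m h2).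
  assert (E : hor l (useq m) = (useq m)^3 *
     ((22 + N * (8 + 2 * (/useq m)^3 * (1 + N) + N * (3 + N))) - 3 * (8 + N*(2+N))^2 / 8)).
  { unfold l; simpl. field. lra. }
  rewrite E in h1.
  assert (0 < useq m ^3) by (apply pow_lt; auto).
  destruct (Rlt_or_le 0 ((22 + N * (8 + 2 * (/useq m)^3 * (1 + N) + N * (3 + N))) - 3 * (8 + N*(2+N))^2 / 8)); auto.
  nra.
Qed.

Lemma ev_K : ev (fun m => deltaR (INR m) N (3 + N) < 0).
Proof.
  pose proof N_pos.
  set (K := 3 + N).
  set (l := [N*(2+N)^2 - N*(2+N)*K; 0; 0;
             -2*N*(5+2*N) - 2*N^2*(3+N)*K + 2*N*(1+N)*K^2; 0; 0; deltaR 0 N K]).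
  assert (Hh := hor_cv l useq useq_cv).
  assert (E0 : hor l 0 = - (N * (2 + N))) by (unfold l, K; simpl; ring).
  rewrite E0 in Hh. apply cv_ev_neg in Hh; [|nra].
  apply (ev_impl _ _ (ev_and _ _ Hh ev_ge1)). intros m [h1 h2].
  pose proof (u_pos m) as hu. rewrite (INR_u m h2).
  assert (E : hor l (useq m) = (useq m)^6 * deltaR ((/useq m)^3) N K).
  { unfold l; simpl. unfold deltaR. field. lra. }
  rewrite E in h1.
  assert (0 < useq m ^6) by (apply pow_lt; auto).
  destruct (Rlt_or_le (deltaR ((/useq m)^3) N K) 0); auto.
  nra.
Qed.

End Fixn.

Theorem corollary1 (n : nat) (Hn : (1 <= n)%nat) :
  (* a root of delta_{m,n} that grows with m exists (for all large m) *)
  (exists r : nat -> R,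
     (exists N0 : nat, forall m, (N0 <= m)%nat -> delta m n (r m) = 0) /\
     cv_infty r) /\
  (* and every such growing root satisfies the expansion with an o(m^{-1/3}) error *)
  (forall r : nat -> R,
     (exists N0 : nat, forall m, (N0 <= m)%nat -> delta m n (r m) = 0) ->
     cv_infty r ->
     Un_cv (fun m => (r m - pstar_approx m n) * Rpower (INR m) (1/3)) 0).
Proof.
  split.
  - destruct (ev_and _ _ (ev_delta_neg n Hn (-1) ltac:(lra)) (ev_delta_pos n Hn 1 ltac:(lra)))
      as [N0 HN0].
    assert (F : forall m, (N0 <= m)%nat ->
              {z : R | pstar_approx m n + (-1) * useq m <= z <= pstar_approx m n + 1 * useq m
                       /\ deltaR (INR m) (INR n) z = 0}).
    { intros m h. destruct (HN0 m h) as [h1 h2].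
      apply (IVT (fun p => deltaR (INR m) (INR n) p)); auto.
      unfold deltaR; reg.
      pose proof (u_pos m). lra. }
    exists (fun m => match le_lt_dec N0 m with left h => proj1_sig (F m h) | right _ => 0 end).
    split.
    + exists N0. intros m h. rewrite delta_eq.
      destruct (le_lt_dec N0 m) as [h'|h']; [|lia].
      destruct (F m h') as [z Hz]. simpl. tauto.
    + intros Y. destruct (ev_lower n Hn Y (-1)) as [N1 HN1].
      exists (max N0 N1). intros m h.
      destruct (le_lt_dec N0 m) as [h'|h']; [|lia].
      destruct (F m h') as [z Hz]. simpl.
      specialize (HN1 m ltac:(lia)). lra.
  - intros r [N1 Hr] Hinf eps Heps.
    set (K := 3 + INR n).
    destruct (Hinf K) as [N2 HN2].
    destruct (ev_and _ _ (ev_and _ _ (ev_conv n Hn) (ev_K n Hn))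
               (ev_and _ _ (ev_and _ _ (ev_delta_neg n Hn (-eps) ltac:(lra))
                                       (ev_delta_pos n Hn eps Heps))
                           (ev_and _ _ (ev_lower n Hn K (-eps)) ev_ge1))) as [N3 HN3].
    exists (max N1 (max N2 N3)). intros m h.
    destruct (HN3 m ltac:(lia)) as [[hc hK] [[hb hb'] [hl h1]]].
    specialize (Hr m ltac:(lia)). specialize (HN2 m ltac:(lia)).
    rewrite delta_eq in Hr.
    pose proof (u_pos m) as hu.
    assert (Hs : pstar_approx m n + - eps * useq m < r m < pstar_approx m n + eps * useq m).
    { apply (squeeze (INR m) (INR n) K); auto.
      assert (0 < eps * useq m) by (apply Rmult_lt_0_compat; auto). lra. }
    unfold Rdist. rewrite Rminus_0_r.
    assert (Ht : Rpower (INR m) (1/3) = / useq m) by (unfold useq; rewrite Rinv_inv; auto).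
    rewrite Ht.
    assert (E : (r m - pstar_approx m n) * / useq m = (r m - pstar_approx m n) / useq m) by reflexivity.
    apply Rabs_def1.
    + apply Rmult_lt_reg_r with (useq m); auto.
      rewrite Rmult_assoc, Rinv_l by lra. lra.
    + apply Rmult_lt_reg_r with (useq m); auto.
      rewrite Rmult_assoc, Rinv_l by lra. lra.
Qed.
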